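(* Let $\mathsf{k}$ be algebraically closed and $\mathsf{P}=(p_{abc})\in\mathsf{k}^8$. The quadratic Jordan algebra $J_{\mathsf{P}}$ defined below is nondegenerate if and only if $D_{\mathscr{H}}(\mathsf{P})\neq0$, where $D_{\mathscr{H}}(\mathsf{P})=p_{111}^2p_{222}^2+p_{112}^2p_{221}^2+p_{121}^2p_{212}^2+p_{122}^2p_{211}^2-2(p_{111}p_{122}p_{211}p_{222}+p_{111}p_{121}p_{212}p_{222}+p_{111}p_{112}p_{221}p_{222}+p_{121}p_{122}p_{211}p_{212}+p_{112}p_{122}p_{211}p_{221}+p_{112}p_{121}p_{212}p_{221})+4(p_{111}p_{122}p_{212}p_{221}+p_{112}p_{121}p_{211}p_{222})$ (Cayley's hyperdeterminant).
   Context: Let $J=\mathsf{k}^9$ with coordinates $u_1,u_2,u_3,x_{ij}$ ($i\in\{1,2\},j\in\{1,2,3\}$); write $\bm{x}_j=(x_{1j},x_{2j})^t$. With the fixed constants $p_{abc}$, put $D^{(1)}_{ij}(x)=p_{1ij}x_{21}-p_{2ij}x_{11}$, $D^{(2)}_{ij}(x)=p_{i1j}x_{22}-p_{i2j}x_{12}$, $D^{(3)}_{ij}(x)=p_{ij1}x_{23}-p_{ij2}x_{13}$ and $D^{(k)}(x)$ the matrix with rows $(-D^{(k)}_{12}(x),D^{(k)}_{11}(x))$, $(-D^{(k)}_{22}(x),D^{(k)}_{21}(x))$; $M^\dagger$ denotes adjugate. Define $\sigma\mapsto\sigma^\sharp$ by $\bm{x}_1^\sharp=-u_1\bm{x}_1+D^{(3)}(x)\bm{x}_2$,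 $\bm{x}_2^\sharp=-u_2\bm{x}_2+D^{(1)}(x)\bm{x}_3$, $\bm{x}_3^\sharp=-u_3\bm{x}_3-D^{(2)}(x)^\dagger\bm{x}_1$, $u_1^\sharp=u_2u_3+\det D^{(1)}(x)$, $u_2^\sharp=u_3u_1+\det D^{(2)}(x)$, $u_3^\sharp=u_1u_2+\det D^{(3)}(x)$. Let $D^{(k)}_{ij}(x^\sharp)$ be $D^{(k)}_{ij}$ evaluated at the coordinates $x^\sharp_{ij}$ of $\sigma^\sharp$, $D^{(k)}(x,x^\sharp)$ the matrix with rows $(-D^{(k)}_{12}(x),D^{(k)}_{11}(x^\sharp))$, $(-D^{(k)}_{22}(x),D^{(k)}_{21}(x^\sharp))$ and $D^{(k)}(x^\sharp,x)$ the matrix with rows $(-D^{(k)}_{12}(x^\sharp),D^{(k)}_{11}(x))$, $(-D^{(k)}_{22}(x^\sharp),D^{(k)}_{21}(x))$. Let $N_{\mathsf{P}}=\tfrac13\sum_{k=1}^3\big(u_ku_k^\sharp-\det D^{(k)}(x,x^\sharp)-\det D^{(k)}(x^\sharp,x)\big)$ (a cubic form with integer coefficients). $J_{\mathsf{P}}$ is the quadratic Jordan algebra of the cubic form $N_{\mathsf{P}}$ with this $\sharp$-mapping and unit $\mathfrak{1}$ (the point $u_1=u_2=u_3=1$, $x_{ij}=0$): with $T(x,y):=-\partial_x\partial_yN_{\mathsf{P}}(\mathfrak{1})+\partial_xN_{\mathsf{P}}(\mathfrak{1})\partial_yN_{\mathsf{P}}(\mathfrak{1})$, $x\sharp y:=(x+y)^\sharp-x^\sharp-y^\sharp$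 and $U_xy:=T(x,y)x-x^\sharp\sharp y$. $J_{\mathsf{P}}$ is nondegenerate if $\{\sigma\in J\mid U_\sigma y=0\ \forall y\in J\}=\{0\}$. *)

(* Defs.v *)
From HB Require Import structures.
From mathcomp Require Import all_boot all_order all_algebra.
From mathcomp Require Import ring.
Set Implicit Arguments. Unset Strict Implicit. Unset Printing Implicit Defensive.
Import Order.TTheory GRing.Theory Num.Theory.
Local Open Scope ring_scope.

(* Indices 1,2 of the paper are encoded as o1 = ord0, o2 = ord_max in 'I_2. *)
Definition o1 : 'I_2 := ord0.
Definition o2 : 'I_2 := ord_max.
Definition j1 : 'I_3 := @Ordinal 3 0 isT.
Definition j2 : 'I_3 := @Ordinal 3 1 isT.
Definition j3 : 'I_3 := @Ordinal 3 2 isT.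

(* The coefficient vector P = (p_abc) in k^8: p a b c = p_{abc}. *)
Definition coeffs (R : Type) := 'I_2 -> 'I_2 -> 'I_2 -> R.

(* Elements of J = k^9: coordinates u1,u2,u3 and the column vectors
   bx_j = (x_{1j}, x_{2j})^t, j = 1,2,3. *)
Record elt (R : Type) := Elt {
  eu1 : R; eu2 : R; eu3 : R;
  ex1 : 'cV[R]_2; ex2 : 'cV[R]_2; ex3 : 'cV[R]_2 }.

Definition xc (R : Type) (s : elt R) (i : 'I_2) (j : 'I_3) : R :=
  match val j with
  | 0 => ex1 s i 0 | 1 => ex2 s i 0 | _ => ex3 s i 0 end.

Section Ops.
Variable R : comRingType.

Definition ezero : elt R := Elt 0 0 0 0 0 0.
Definition eadd (a b : elt R) : elt R :=
  Elt (eu1 a + eu1 b) (eu2 a + eu2 b) (eu3 a + eu3 b)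
      (ex1 a + ex1 b) (ex2 a + ex2 b) (ex3 a + ex3 b).
Definition eopp (a : elt R) : elt R :=
  Elt (- eu1 a) (- eu2 a) (- eu3 a) (- ex1 a) (- ex2 a) (- ex3 a).
Definition escale (c : R) (a : elt R) : elt R :=
  Elt (c * eu1 a) (c * eu2 a) (c * eu3 a) (c *: ex1 a) (c *: ex2 a) (c *: ex3 a).
Definition eone : elt R := Elt 1 1 1 0 0 0.

Variable p : coeffs R.

Definition Dent (k : 'I_3) (s : elt R) (i j : 'I_2) : R :=
  match val k with
  | 0 => p o1 i j * xc s o2 j1 - p o2 i j * xc s o1 j1
  | 1 => p i o1 j * xc s o2 j2 - p i o2 j * xc s o1 j2
  | _ => p i j o1 * xc s o2 j3 - p i j o2 * xc s o1 j3
  end.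

Definition Dmix (a b : 'I_2 -> 'I_2 -> R) : 'M[R]_2 :=
  \matrix_(r < 2, c < 2) if c == o1 then - a r o2 else b r o1.

Definition Dm (k : 'I_3) (s : elt R) : 'M[R]_2 := Dmix (Dent k s) (Dent k s).
Definition Dm2 (k : 'I_3) (s t : elt R) : 'M[R]_2 := Dmix (Dent k s) (Dent k t).

Definition sharp (s : elt R) : elt R :=
  Elt (eu2 s * eu3 s + \det (Dm j1 s))
      (eu3 s * eu1 s + \det (Dm j2 s))
      (eu1 s * eu2 s + \det (Dm j3 s))
      (- (eu1 s *: ex1 s) + Dm j3 s *m ex2 s)
      (- (eu2 s *: ex2 s) + Dm j1 s *m ex3 s)
      (- (eu3 s *: ex3 s) - \adj (Dm j2 s) *m ex1 s).

Definition euk (k : 'I_3) (s : elt R) : R :=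
  match val k with 0 => eu1 s | 1 => eu2 s | _ => eu3 s end.

Definition N3form (s : elt R) : R :=
  \sum_(k < 3) (euk k s * euk k (sharp s)
                 - \det (Dm2 k s (sharp s)) - \det (Dm2 k (sharp s) s)).

(* N_P: the integer-coefficient cubic form with 3 * N_P = N3form
   (see lemma N3formE below); explicit expansion, valid in every
   characteristic. *)
Definition Nform (s : elt R) : R :=
  let u1 := eu1 s in let u2 := eu2 s in let u3 := eu3 s in
  let x11 := xc s o1 j1 in let x21 := xc s o2 j1 in
  let x12 := xc s o1 j2 in let x22 := xc s o2 j2 in
  let x13 := xc s o1 j3 in let x23 := xc s o2 j3 in
  let p111 := p o1 o1 o1 in let p112 := p o1 o1 o2 in
  let p121 := p o1 o2 o1 in let p122 := p o1 o2 o2 in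
  let p211 := p o2 o1 o1 in let p212 := p o2 o1 o2 in
  let p221 := p o2 o2 o1 in let p222 := p o2 o2 o2 in
    2%:R * x21 * x22 * x23 * p112 * p121 * p211
    - x21 * x22 * x23 * p111 * p122 * p211
    - x21 * x22 * x23 * p111 * p121 * p212
    - x21 * x22 * x23 * p111 * p112 * p221
    + x21 * x22 * x23 * p111 * p111 * p222
    - x21 * x22 * x13 * p112 * p122 * p211
    - x21 * x22 * x13 * p112 * p121 * p212
    + x21 * x22 * x13 * p112 * p112 * p221
    + 2%:R * x21 * x22 * x13 * p111 * p122 * p212
    - x21 * x22 * x13 * p111 * p112 * p222
    - x21 * x12 * x23 * p121 * p122 * p211
    + x21 * x12 * x23 * p121 * p121 * p212
    - x21 * x12 * x23 * p112 * p121 * p221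
    + 2%:R * x21 * x12 * x23 * p111 * p122 * p221
    - x21 * x12 * x23 * p111 * p121 * p222
    + x21 * x12 * x13 * p122 * p122 * p211
    - x21 * x12 * x13 * p121 * p122 * p212
    - x21 * x12 * x13 * p112 * p122 * p221
    + 2%:R * x21 * x12 * x13 * p112 * p121 * p222
    - x21 * x12 * x13 * p111 * p122 * p222
    + x11 * x22 * x23 * p122 * p211 * p211
    - x11 * x22 * x23 * p121 * p211 * p212
    - x11 * x22 * x23 * p112 * p211 * p221
    + 2%:R * x11 * x22 * x23 * p111 * p212 * p221
    - x11 * x22 * x23 * p111 * p211 * p222
    - x11 * x22 * x13 * p122 * p211 * p212
    + x11 * x22 * x13 * p121 * p212 * p212
    - x11 * x22 * x13 * p112 * p212 * p221
    + 2%:R * x11 * x22 * x13 * p112 * p211 * p222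
    - x11 * x22 * x13 * p111 * p212 * p222
    - x11 * x12 * x23 * p122 * p211 * p221
    - x11 * x12 * x23 * p121 * p212 * p221
    + 2%:R * x11 * x12 * x23 * p121 * p211 * p222
    + x11 * x12 * x23 * p112 * p221 * p221
    - x11 * x12 * x23 * p111 * p221 * p222
    + 2%:R * x11 * x12 * x13 * p122 * p212 * p221
    - x11 * x12 * x13 * p122 * p211 * p222
    - x11 * x12 * x13 * p121 * p212 * p222
    - x11 * x12 * x13 * p112 * p221 * p222
    + x11 * x12 * x13 * p111 * p222 * p222
    - u3 * x23 * x23 * p121 * p211
    + u3 * x23 * x23 * p111 * p221
    + u3 * x13 * x23 * p122 * p211
    + u3 * x13 * x23 * p121 * p212
    - u3 * x13 * x23 * p112 * p221
    - u3 * x13 * x23 * p111 * p222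
    - u3 * x13 * x13 * p122 * p212
    + u3 * x13 * x13 * p112 * p222
    - u2 * x22 * x22 * p112 * p211
    + u2 * x22 * x22 * p111 * p212
    + u2 * x12 * x22 * p122 * p211
    - u2 * x12 * x22 * p121 * p212
    + u2 * x12 * x22 * p112 * p221
    - u2 * x12 * x22 * p111 * p222
    - u2 * x12 * x12 * p122 * p221
    + u2 * x12 * x12 * p121 * p222
    - u1 * x21 * x21 * p112 * p121
    + u1 * x21 * x21 * p111 * p122
    - u1 * x11 * x21 * p122 * p211
    + u1 * x11 * x21 * p121 * p212
    + u1 * x11 * x21 * p112 * p221
    - u1 * x11 * x21 * p111 * p222
    - u1 * x11 * x11 * p212 * p221
    + u1 * x11 * x11 * p211 * p222
    + u1 * u2 * u3.

End Ops.

Definition map_elt (R S : Type) (f : R -> S) (s : elt R) : elt S :=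
  Elt (f (eu1 s)) (f (eu2 s)) (f (eu3 s))
      (map_mx f (ex1 s)) (map_mx f (ex2 s)) (map_mx f (ex3 s)).

Section Jordan.
Variable k : fieldType.
Variable p : coeffs k.

(* directional derivative  \partial_x N_P(1) = coefficient of t in N_P(1 + t x) *)
Definition dN1 (x : elt k) : k :=
  (Nform (fun a b c => (p a b c)%:P)
     (eadd (eone _) (escale 'X (map_elt polyC x))))`_1.

(* \partial_x \partial_y N_P(1) = coefficient of s t in N_P(1 + s x + t y) *)
Definition ddN1 (x y : elt k) : k :=
  let P2 := fun a b c => ((p a b c)%:P)%:P : {poly {poly k}} in
  let xs := escale ('X%:P) (map_elt (fun c => c%:P%:P) x) in
  let yt := escale 'X (map_elt (fun c => c%:P%:P) y) in
  ((Nform P2 (eadd (eone _) (eadd xs yt)))`_1)`_1.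

Definition Tform (x y : elt k) : k := - ddN1 x y + dN1 x * dN1 y.

Definition sharp2 (x y : elt k) : elt k :=
  eadd (sharp p (eadd x y)) (eopp (eadd (sharp p x) (sharp p y))).

Definition Uop (x y : elt k) : elt k :=
  eadd (escale (Tform x y) x) (eopp (sharp2 (sharp p x) y)).

Definition J_nondegenerate : Prop :=
  forall s : elt k, (forall y : elt k, Uop s y = ezero k) -> s = ezero k.

End Jordan.

Definition hyperdet (R : comRingType) (p : coeffs R) : R :=
  let p111 := p o1 o1 o1 in let p112 := p o1 o1 o2 in
  let p121 := p o1 o2 o1 in let p122 := p o1 o2 o2 in
  let p211 := p o2 o1 o1 in let p212 := p o2 o1 o2 in
  let p221 := p o2 o2 o1 in let p222 := p o2 o2 o2 in
  p111^+2 * p222^+2 + p112^+2 * p221^+2 + p121^+2 * p212^+2 + p122^+2 * p211^+2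
  - 2%:R * (p111 * p122 * p211 * p222 + p111 * p121 * p212 * p222
            + p111 * p112 * p221 * p222 + p121 * p122 * p211 * p212
            + p112 * p122 * p211 * p221 + p112 * p121 * p212 * p221)
  + 4%:R * (p111 * p122 * p212 * p221 + p112 * p121 * p211 * p222).

Lemma det2E (R : comRingType) (A : 'M[R]_2) :
  \det A = A o1 o1 * A o2 o2 - A o1 o2 * A o2 o1.
Proof.
rewrite (expand_det_row _ ord0) !big_ord_recl big_ord0 /cofactor !det_mx11 !mxE /=.
have E1 : lift ord0 (0 : 'I_1) = o2 :> 'I_2 by apply: val_inj.
have E2 : lift ord0 (ord0 : 'I_1) = o2 :> 'I_2 by apply: val_inj.
have E3 : lift o2 (0 : 'I_1) = o1 :> 'I_2 by apply: val_inj.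
rewrite E1 E3 /= expr0 expr1 mul1r mulN1r addr0.
by rewrite -/o1 mulrN.
Qed.

Lemma adj2E (R : comRingType) (A : 'M[R]_2) :
  \adj A = \matrix_(i < 2, j < 2)
     (if i == o1 then (if j == o1 then A o2 o2 else - A o1 o2)
      else (if j == o1 then - A o2 o1 else A o1 o1)).
Proof.
apply/matrixP => i j; rewrite !mxE /cofactor det_mx11 !mxE.
case: i => [[|[|//]] Hi]; case: j => [[|[|//]] Hj] /=;
  rewrite ?expr0 ?expr1 ?exprS ?expr0 ?mul1r ?mulN1r ?mulrN1 ?opprK;
  rewrite ?mul1r; try congr (- _);
  by congr (A _ _); apply: val_inj.
Qed.

Lemma N3formE (R : comRingType) (p : coeffs R) (s : elt R) :
  3%:R * Nform p s = N3form p s.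
Proof.
case: s => u1 u2 u3 v1 v2 v3.
have n21 : (o2 == o1) = false by [].
have L : lift ord0 (ord0 : 'I_1) = o2 :> 'I_2 by apply: val_inj.
have L0 : (ord0 : 'I_2) = o1 by [].
rewrite /N3form !big_ord_recl big_ord0.
rewrite /Nform /sharp /Dm2 /Dm /Dmix /euk /Dent /xc /= !det2E !adj2E.
rewrite ?mxE /= ?eqxx ?n21 /=.
rewrite ?mxE ?big_ord_recl ?big_ord0 /= ?L ?L0 ?mxE.
rewrite ?eqxx ?n21 /=.
rewrite /o1 /o2; ring.
Qed.

(* Main.v *)
Require Import Defs.
From HB Require Import structures.
From mathcomp Require Import all_boot all_order all_algebra.
From mathcomp Require Import ring.
Set Implicit Arguments. Unset Strict Implicit. Unset Printing Implicit Defensive.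
Import Order.TTheory GRing.Theory Num.Theory.
Local Open Scope ring_scope.

Definition col2 (R : Type) (a b : R) : 'cV[R]_2 :=
  \col_(i < 2) (if i == o1 then a else b).

Definition mk (R : Type) (a1 a2 a3 a4 a5 a6 a7 a8 a9 : R) : elt R :=
  Elt a1 a2 a3 (col2 a4 a5) (col2 a6 a7) (col2 a8 a9).

Lemma col2E (R : Type) (a b : R) : col2 a b o1 0 = a /\ col2 a b o2 0 = b.
Proof. by rewrite /col2 !mxE. Qed.

Section MK.
Variable R : Type.
Variables a1 a2 a3 a4 a5 a6 a7 a8 a9 : R.
Let s := mk a1 a2 a3 a4 a5 a6 a7 a8 a9.
Lemma xc11 : xc s o1 j1 = a4. Proof. by rewrite /xc /= mxE. Qed.
Lemma xc21 : xc s o2 j1 = a5. Proof. by rewrite /xc /= mxE. Qed.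
Lemma xc12 : xc s o1 j2 = a6. Proof. by rewrite /xc /= mxE. Qed.
Lemma xc22 : xc s o2 j2 = a7. Proof. by rewrite /xc /= mxE. Qed.
Lemma xc13 : xc s o1 j3 = a8. Proof. by rewrite /xc /= mxE. Qed.
Lemma xc23 : xc s o2 j3 = a9. Proof. by rewrite /xc /= mxE. Qed.
End MK.

Definition xcE := (xc11, xc21, xc12, xc22, xc13, xc23).

Lemma col2_eta (R : Type) (v : 'cV[R]_2) : v = col2 (v o1 0) (v o2 0).
Proof.
apply/matrixP => i j; rewrite !mxE (ord1 j).
by case: i => [[|[|//]] Hi]; congr (v _ _); apply: val_inj.
Qed.

Lemma eltE (R : Type) (s : elt R) :
  s = mk (eu1 s) (eu2 s) (eu3 s) (xc s o1 j1) (xc s o2 j1) (xc s o1 j2)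
         (xc s o2 j2) (xc s o1 j3) (xc s o2 j3).
Proof.
case: s => u1 u2 u3 v1 v2 v3; rewrite /mk /xc /=.
by rewrite -!col2_eta.
Qed.

Lemma mk_inj (R : Type) (a1 a2 a3 a4 a5 a6 a7 a8 a9 b1 b2 b3 b4 b5 b6 b7 b8 b9 : R) :
  mk a1 a2 a3 a4 a5 a6 a7 a8 a9 = mk b1 b2 b3 b4 b5 b6 b7 b8 b9 ->
  a1 = b1 /\ a2 = b2 /\ a3 = b3 /\ a4 = b4 /\ a5 = b5 /\ a6 = b6 /\ a7 = b7 /\ a8 = b8 /\ a9 = b9.
Proof.
move=> E.
have G1 := congr1 (fun s => xc s o1 j1) E; have G2 := congr1 (fun s => xc s o2 j1) E.
have G3 := congr1 (fun s => xc s o1 j2) E; have G4 := congr1 (fun s => xc s o2 j2) E.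
have G5 := congr1 (fun s => xc s o1 j3) E; have G6 := congr1 (fun s => xc s o2 j3) E.
rewrite /= !xcE in G1 G2 G3 G4 G5 G6.
by case: E => -> -> -> _ _ _.
Qed.

Section MKops.
Variable R : comRingType.
Lemma col2_add (a b c d : R) : col2 a b + col2 c d = col2 (a + c) (b + d).
Proof. by apply/matrixP => i j; rewrite !mxE; case: ifP. Qed.
Lemma col2_opp (a b : R) : - col2 a b = col2 (- a) (- b).
Proof. by apply/matrixP => i j; rewrite !mxE; case: ifP. Qed.
Lemma col2_scale (c a b : R) : c *: col2 a b = col2 (c * a) (c * b).
Proof. by apply/matrixP => i j; rewrite !mxE; case: ifP. Qed.
Lemma col2_map (S : Type) (f : R -> S) (a b : R) : map_mx f (col2 a b) = col2 (f a) (f b).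
Proof. by apply/matrixP => i j; rewrite !mxE; case: ifP. Qed.
End MKops.

Section MKops2.
Variable R : comRingType.
Implicit Types a b : R.
Lemma mk_add a1 a2 a3 a4 a5 a6 a7 a8 a9 b1 b2 b3 b4 b5 b6 b7 b8 b9 :
  eadd (mk a1 a2 a3 a4 a5 a6 a7 a8 a9) (mk b1 b2 b3 b4 b5 b6 b7 b8 b9) =
  mk (a1 + b1) (a2 + b2) (a3 + b3) (a4 + b4) (a5 + b5) (a6 + b6) (a7 + b7) (a8 + b8) (a9 + b9).
Proof. by rewrite /eadd /mk /= !col2_add. Qed.
Lemma mk_opp a1 a2 a3 a4 a5 a6 a7 a8 a9 :
  eopp (mk a1 a2 a3 a4 a5 a6 a7 a8 a9) =
  mk (- a1) (- a2) (- a3) (- a4) (- a5) (- a6) (- a7) (- a8) (- a9).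
Proof. by rewrite /eopp /mk /= !col2_opp. Qed.
Lemma mk_scale c a1 a2 a3 a4 a5 a6 a7 a8 a9 :
  escale c (mk a1 a2 a3 a4 a5 a6 a7 a8 a9) =
  mk (c * a1) (c * a2) (c * a3) (c * a4) (c * a5) (c * a6) (c * a7) (c * a8) (c * a9).
Proof. by rewrite /escale /mk /= !col2_scale. Qed.
Lemma mk_map (S : Type) (f : R -> S) a1 a2 a3 a4 a5 a6 a7 a8 a9 :
  map_elt f (mk a1 a2 a3 a4 a5 a6 a7 a8 a9) =
  mk (f a1) (f a2) (f a3) (f a4) (f a5) (f a6) (f a7) (f a8) (f a9).
Proof. by rewrite /map_elt /mk /= !col2_map. Qed.
Lemma col2_0 : col2 (0 : R) 0 = 0.
Proof. by apply/matrixP => i j; rewrite !mxE; case: ifP. Qed.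
Lemma eoneE : eone R = mk 1 1 1 0 0 0 0 0 0.
Proof. by rewrite /eone /mk col2_0. Qed.
Lemma ezeroE : ezero R = mk 0 0 0 0 0 0 0 0 0.
Proof. by rewrite /ezero /mk col2_0. Qed.
End MKops2.

Inductive ex := V of nat | C of nat | A of ex & ex | N of ex | M of ex & ex.

Fixpoint ev (R : comRingType) (l : seq R) (e : ex) : R :=
  match e with
  | V i => nth 0 l i
  | C n => n%:R
  | A a b => ev l a + ev l b
  | N a => - ev l a
  | M a b => ev l a * ev l b
  end.

Lemma ev_map (R S : comRingType) (f : {rmorphism R -> S}) (l : seq R) e :
  f (ev l e) = ev (map f l) e.
Proof.
elim: e => [i|n|a IHa b IHb|a IHa|a IHa b IHb] /=.
- case: (ltnP i (size l)) => H; first by rewrite (nth_map 0).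
  by rewrite !nth_default ?size_map // rmorph0.
- by rewrite rmorph_nat.
- by rewrite rmorphD IHa IHb.
- by rewrite rmorphN IHa.
- by rewrite rmorphM IHa IHb.
Qed.

Definition envl (R : Type) (p : coeffs R) (a1 a2 a3 a4 a5 a6 a7 a8 a9 b1 b2 b3 b4 b5 b6 b7 b8 b9 : R) : seq R :=
  [:: p o1 o1 o1; p o1 o1 o2; p o1 o2 o1; p o1 o2 o2; p o2 o1 o1; p o2 o1 o2; p o2 o2 o1; p o2 o2 o2;
      a1; a2; a3; a4; a5; a6; a7; a8; a9; b1; b2; b3; b4; b5; b6; b7; b8; b9].

Lemma envl_map (R S : Type) (f : R -> S) (p : coeffs R) a1 a2 a3 a4 a5 a6 a7 a8 a9 b1 b2 b3 b4 b5 b6 b7 b8 b9 :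
  map f (envl p a1 a2 a3 a4 a5 a6 a7 a8 a9 b1 b2 b3 b4 b5 b6 b7 b8 b9) =
  envl (fun a b c => f (p a b c)) (f a1) (f a2) (f a3) (f a4) (f a5) (f a6) (f a7) (f a8) (f a9)
     (f b1) (f b2) (f b3) (f b4) (f b5) (f b6) (f b7) (f b8) (f b9).
Proof. by []. Qed.
Definition Z1 (R : comRingType) (p : coeffs R) (a1 a2 a3 a4 a5 a6 a7 a8 a9 t : R) : R := (a2 * a3 + a1 * a3 + a1 * a2 + a1 * a2 * a3 * t - (p o2 o1 o2) * (p o2 o2 o1) * a4^+2 - (p o2 o1 o2) * (p o2 o2 o1) * a1 * a4^+2 * t + (p o2 o1 o1) * (p o2 o2 o2) * a4^+2 + (p o2 o1 o1) * (p o2 o2 o2) * a1 * a4^+2 * t - (p o1 o2 o2) * (p o2 o2 o1) * a6^+2 - (p o1 o2 o2) * (p o2 o2 o1) * a2 * a6^+2 * t - (p o1 o2 o2) * (p o2 o1 o2) * a8^+2 - (p o1 o2 o2) * (p o2 o1 o2) * a3 * a8^+2 * t + 2%:R * (p o1 o2 o2) * (p o2 o1 o2) * (p o2 o2 o1) * a4 * a6 * a8 * t + (p o1 o2 o2) * (p o2 o1 o1) * a8 * a9 + (p o1 o2 o2) * (p o2 o1 o1) * a6 * a7 - (p o1 o2 o2) * (p o2 o1 o1) * a4 * a5 + (p o1 o2 o2) * (p o2 o1 o1) * a3 * a8 * a9 * t + (p o1 o2 o2) * (p o2 o1 o1) * a2 * a6 * a7 * t - (p o1 o2 o2) * (p o2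 o1 o1) * a1 * a4 * a5 * t - (p o1 o2 o2) * (p o2 o1 o1) * (p o2 o2 o2) * a4 * a6 * a8 * t - (p o1 o2 o2) * (p o2 o1 o1) * (p o2 o2 o1) * a4 * a6 * a9 * t - (p o1 o2 o2) * (p o2 o1 o1) * (p o2 o1 o2) * a4 * a7 * a8 * t + (p o1 o2 o2) * (p o2 o1 o1)^+2 * a4 * a7 * a9 * t + (p o1 o2 o2)^+2 * (p o2 o1 o1) * a5 * a6 * a8 * t + (p o1 o2 o1) * (p o2 o2 o2) * a6^+2 + (p o1 o2 o1) * (p o2 o2 o2) * a2 * a6^+2 * t + (p o1 o2 o1) * (p o2 o1 o2) * a8 * a9 - (p o1 o2 o1) * (p o2 o1 o2) * a6 * a7 + (p o1 o2 o1) * (p o2 o1 o2) * a4 * a5 + (p o1 o2 o1) * (p o2 o1 o2) * a3 * a8 * a9 * t - (p o1 o2 o1) * (p o2 o1 o2) * a2 * a6 * a7 * t + (p o1 o2 o1) * (p o2 o1 o2) * a1 * a4 * a5 * t - (p o1 o2 o1) * (p o2 o1 o2) * (p o2 o2 o2) * a4 * a6 * a8 * t - (p o1 o2 o1) * (p o2 o1 o2) * (p o2 o2 o1) * a4 * a6 * a9 * t + (p o1 o2 o1) * (p o2 o1 o2)^+2 * a4 * a7 * a8 * t - (p o1 o2 o1) * (p o2 o1 o1) * a9^+2 - (p o1 o2 o1) * (p o2 o1 o1) * a3 * a9^+2 * t + 2%:R * (p o1 o2 o1) * (p o2 o1 o1) * (p o2 o2 o2) * a4 * a6 * a9 * t -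 (p o1 o2 o1) * (p o2 o1 o1) * (p o2 o1 o2) * a4 * a7 * a9 * t - (p o1 o2 o1) * (p o1 o2 o2) * (p o2 o1 o2) * a5 * a6 * a8 * t - (p o1 o2 o1) * (p o1 o2 o2) * (p o2 o1 o1) * a5 * a6 * a9 * t + (p o1 o2 o1)^+2 * (p o2 o1 o2) * a5 * a6 * a9 * t + (p o1 o1 o2) * (p o2 o2 o2) * a8^+2 + (p o1 o1 o2) * (p o2 o2 o2) * a3 * a8^+2 * t - (p o1 o1 o2) * (p o2 o2 o1) * a8 * a9 + (p o1 o1 o2) * (p o2 o2 o1) * a6 * a7 + (p o1 o1 o2) * (p o2 o2 o1) * a4 * a5 - (p o1 o1 o2) * (p o2 o2 o1) * a3 * a8 * a9 * t + (p o1 o1 o2) * (p o2 o2 o1) * a2 * a6 * a7 * t + (p o1 o1 o2) * (p o2 o2 o1) * a1 * a4 * a5 * t - (p o1 o1 o2) * (p o2 o2 o1) * (p o2 o2 o2) * a4 * a6 * a8 * t + (p o1 o1 o2) * (p o2 o2 o1)^+2 * a4 * a6 * a9 * t - (p o1 o1 o2) * (p o2 o1 o2) * (p o2 o2 o1) * a4 * a7 * a8 * t - (p o1 o1 o2) * (p o2 o1 o1) * a7^+2 - (p o1 o1 o2) * (p o2 o1 o1) * a2 * a7^+2 * t + 2%:R * (p o1 o1 o2) * (p o2 o1 o1) * (p o2 o2 o2) * a4 * a7 * a8 * t - (p o1 o1 o2) * (p o2 o1 o1) * (p o2 o2 o1) * a4 * a7 * a9 * t - (p o1 o1 o2) * (p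 o1 o2 o2) * (p o2 o2 o1) * a5 * a6 * a8 * t - (p o1 o1 o2) * (p o1 o2 o2) * (p o2 o1 o1) * a5 * a7 * a8 * t - (p o1 o1 o2) * (p o1 o2 o1) * a5^+2 - (p o1 o1 o2) * (p o1 o2 o1) * a1 * a5^+2 * t + 2%:R * (p o1 o1 o2) * (p o1 o2 o1) * (p o2 o2 o2) * a5 * a6 * a8 * t - (p o1 o1 o2) * (p o1 o2 o1) * (p o2 o2 o1) * a5 * a6 * a9 * t - (p o1 o1 o2) * (p o1 o2 o1) * (p o2 o1 o2) * a5 * a7 * a8 * t + 2%:R * (p o1 o1 o2) * (p o1 o2 o1) * (p o2 o1 o1) * a5 * a7 * a9 * t + (p o1 o1 o2)^+2 * (p o2 o2 o1) * a5 * a7 * a8 * t - (p o1 o1 o1) * (p o2 o2 o2) * a8 * a9 - (p o1 o1 o1) * (p o2 o2 o2) * a6 * a7 - (p o1 o1 o1) * (p o2 o2 o2) * a4 * a5 - (p o1 o1 o1) * (p o2 o2 o2) * a3 * a8 * a9 * t - (p o1 o1 o1) * (p o2 o2 o2) * a2 * a6 * a7 * t - (p o1 o1 o1) * (p o2 o2 o2) * a1 * a4 * a5 * t + (p o1 o1 o1) * (p o2 o2 o2)^+2 * a4 * a6 * a8 * t + (p o1 o1 o1) * (p o2 o2 o1) * a9^+2 + (p o1 o1 o1) * (p o2 o2 o1) * a3 * a9^+2 * t - (p o1 o1 o1) * (p o2 o2 o1) * (p o2 o2 o2) * a4 * a6 * a9 * t + (p o1 o1 o1) * (p o2 o1 o2)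 * a7^+2 + (p o1 o1 o1) * (p o2 o1 o2) * a2 * a7^+2 * t - (p o1 o1 o1) * (p o2 o1 o2) * (p o2 o2 o2) * a4 * a7 * a8 * t + 2%:R * (p o1 o1 o1) * (p o2 o1 o2) * (p o2 o2 o1) * a4 * a7 * a9 * t - (p o1 o1 o1) * (p o2 o1 o1) * (p o2 o2 o2) * a4 * a7 * a9 * t + (p o1 o1 o1) * (p o1 o2 o2) * a5^+2 + (p o1 o1 o1) * (p o1 o2 o2) * a1 * a5^+2 * t - (p o1 o1 o1) * (p o1 o2 o2) * (p o2 o2 o2) * a5 * a6 * a8 * t + 2%:R * (p o1 o1 o1) * (p o1 o2 o2) * (p o2 o2 o1) * a5 * a6 * a9 * t + 2%:R * (p o1 o1 o1) * (p o1 o2 o2) * (p o2 o1 o2) * a5 * a7 * a8 * t - (p o1 o1 o1) * (p o1 o2 o2) * (p o2 o1 o1) * a5 * a7 * a9 * t - (p o1 o1 o1) * (p o1 o2 o1) * (p o2 o2 o2) * a5 * a6 * a9 * t - (p o1 o1 o1) * (p o1 o2 o1) * (p o2 o1 o2) * a5 * a7 * a9 * t - (p o1 o1 o1) * (p o1 o1 o2) * (p o2 o2 o2) * a5 * a7 * a8 * t - (p o1 o1 o1) * (p o1 o1 o2) * (p o2 o2 o1) * a5 * a7 * a9 * t + (p o1 o1 o1)^+2 * (p o2 o2 o2) * a5 * a7 * a9 * t).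

Definition Z2 (R : comRingType) (p : coeffs R) (a1 a2 a3 a4 a5 a6 a7 a8 a9 b1 b2 b3 b4 b5 b6 b7 b8 b9 s t : R) : R := (b2 * b3 + b1 * b3 + b1 * b2 + b1 * b2 * b3 * t + a3 * b1 * b2 * s + a2 * b1 * b3 * s + a1 * b2 * b3 * s - (p o2 o1 o2) * (p o2 o2 o1) * b4^+2 - (p o2 o1 o2) * (p o2 o2 o1) * b1 * b4^+2 * t - 2%:R * (p o2 o1 o2) * (p o2 o2 o1) * a4 * b1 * b4 * s - (p o2 o1 o2) * (p o2 o2 o1) * a1 * b4^+2 * s + (p o2 o1 o1) * (p o2 o2 o2) * b4^+2 + (p o2 o1 o1) * (p o2 o2 o2) * b1 * b4^+2 * t + 2%:R * (p o2 o1 o1) * (p o2 o2 o2) * a4 * b1 * b4 * s + (p o2 o1 o1) * (p o2 o2 o2) * a1 * b4^+2 * s - (p o1 o2 o2) * (p o2 o2 o1) * b6^+2 - (p o1 o2 o2) * (p o2 o2 o1) * b2 * b6^+2 * t - 2%:R * (p o1 o2 o2) * (p o2 o2 o1) * a6 * b2 * b6 * s - (p o1 o2 o2) * (p o2 o2 o1) * a2 * b6^+2 * s - (p o1 o2 o2) * (p o2 o1 o2) * b8^+2 - (p o1 o2 o2) * (p o2 o1 o2) * b3 * b8^+2 * t - 2%:R * (p o1 o2 o2) * (p o2 o1 o2) * a8 * b3 * b8 * s - (p o1 o2 o2) * (p o2 o1 o2) * a3 * b8^+2 * s + 2%:R * (p o1 o2 o2) * (p o2 o1 o2) * (p o2 o2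 o1) * b4 * b6 * b8 * t + 2%:R * (p o1 o2 o2) * (p o2 o1 o2) * (p o2 o2 o1) * a8 * b4 * b6 * s + 2%:R * (p o1 o2 o2) * (p o2 o1 o2) * (p o2 o2 o1) * a6 * b4 * b8 * s + 2%:R * (p o1 o2 o2) * (p o2 o1 o2) * (p o2 o2 o1) * a4 * b6 * b8 * s + (p o1 o2 o2) * (p o2 o1 o1) * b8 * b9 + (p o1 o2 o2) * (p o2 o1 o1) * b6 * b7 - (p o1 o2 o2) * (p o2 o1 o1) * b4 * b5 + (p o1 o2 o2) * (p o2 o1 o1) * b3 * b8 * b9 * t + (p o1 o2 o2) * (p o2 o1 o1) * b2 * b6 * b7 * t - (p o1 o2 o2) * (p o2 o1 o1) * b1 * b4 * b5 * t + (p o1 o2 o2) * (p o2 o1 o1) * a9 * b3 * b8 * s + (p o1 o2 o2) * (p o2 o1 o1) * a8 * b3 * b9 * s + (p o1 o2 o2) * (p o2 o1 o1) * a7 * b2 * b6 * s + (p o1 o2 o2) * (p o2 o1 o1) * a6 * b2 * b7 * s - (p o1 o2 o2) * (p o2 o1 o1) * a5 * b1 * b4 * s - (p o1 o2 o2) * (p o2 o1 o1) * a4 * b1 * b5 * s + (p o1 o2 o2) * (p o2 o1 o1) * a3 * b8 * b9 * s + (p o1 o2 o2) * (p o2 o1 o1) * a2 * b6 * b7 * s - (p o1 o2 o2) * (p o2 o1 o1) * a1 * b4 * b5 * s - (p o1 o2 o2) * (p o2 o1 o1) * (p o2 o2 o2) * b4 * b6 * b8 * t - (p o1 o2 o2)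 * (p o2 o1 o1) * (p o2 o2 o2) * a8 * b4 * b6 * s - (p o1 o2 o2) * (p o2 o1 o1) * (p o2 o2 o2) * a6 * b4 * b8 * s - (p o1 o2 o2) * (p o2 o1 o1) * (p o2 o2 o2) * a4 * b6 * b8 * s - (p o1 o2 o2) * (p o2 o1 o1) * (p o2 o2 o1) * b4 * b6 * b9 * t - (p o1 o2 o2) * (p o2 o1 o1) * (p o2 o2 o1) * a9 * b4 * b6 * s - (p o1 o2 o2) * (p o2 o1 o1) * (p o2 o2 o1) * a6 * b4 * b9 * s - (p o1 o2 o2) * (p o2 o1 o1) * (p o2 o2 o1) * a4 * b6 * b9 * s - (p o1 o2 o2) * (p o2 o1 o1) * (p o2 o1 o2) * b4 * b7 * b8 * t - (p o1 o2 o2) * (p o2 o1 o1) * (p o2 o1 o2) * a8 * b4 * b7 * s - (p o1 o2 o2) * (p o2 o1 o1) * (p o2 o1 o2) * a7 * b4 * b8 * s - (p o1 o2 o2) * (p o2 o1 o1) * (p o2 o1 o2) * a4 * b7 * b8 * s + (p o1 o2 o2) * (p o2 o1 o1)^+2 * b4 * b7 * b9 * t + (p o1 o2 o2) * (p o2 o1 o1)^+2 * a9 * b4 * b7 * s + (p o1 o2 o2) * (p o2 o1 o1)^+2 * a7 * b4 * b9 * s + (p o1 o2 o2) * (p o2 o1 o1)^+2 * a4 * b7 * b9 * s + (p o1 o2 o2)^+2 * (p o2 o1 o1) * b5 * b6 * b8 * t + (p o1 o2 o2)^+2 * (p o2 o1 o1) * a8 * b5 * b6 * s + (p o1 o2 o2)^+2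 * (p o2 o1 o1) * a6 * b5 * b8 * s + (p o1 o2 o2)^+2 * (p o2 o1 o1) * a5 * b6 * b8 * s + (p o1 o2 o1) * (p o2 o2 o2) * b6^+2 + (p o1 o2 o1) * (p o2 o2 o2) * b2 * b6^+2 * t + 2%:R * (p o1 o2 o1) * (p o2 o2 o2) * a6 * b2 * b6 * s + (p o1 o2 o1) * (p o2 o2 o2) * a2 * b6^+2 * s + (p o1 o2 o1) * (p o2 o1 o2) * b8 * b9 - (p o1 o2 o1) * (p o2 o1 o2) * b6 * b7 + (p o1 o2 o1) * (p o2 o1 o2) * b4 * b5 + (p o1 o2 o1) * (p o2 o1 o2) * b3 * b8 * b9 * t - (p o1 o2 o1) * (p o2 o1 o2) * b2 * b6 * b7 * t + (p o1 o2 o1) * (p o2 o1 o2) * b1 * b4 * b5 * t + (p o1 o2 o1) * (p o2 o1 o2) * a9 * b3 * b8 * s + (p o1 o2 o1) * (p o2 o1 o2) * a8 * b3 * b9 * s - (p o1 o2 o1) * (p o2 o1 o2) * a7 * b2 * b6 * s - (p o1 o2 o1) * (p o2 o1 o2) * a6 * b2 * b7 * s + (p o1 o2 o1) * (p o2 o1 o2) * a5 * b1 * b4 * s + (p o1 o2 o1) * (p o2 o1 o2) * a4 * b1 * b5 * s + (p o1 o2 o1) * (p o2 o1 o2) * a3 * b8 * b9 * s - (p o1 o2 o1) * (p o2 o1 o2) * a2 * b6 * b7 * s + (p o1 o2 o1) * (p o2 o1 o2) * a1 * b4 * b5 * s - (p o1 o2 o1) * (p o2 o1 o2) * (p o2 o2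 o2) * b4 * b6 * b8 * t - (p o1 o2 o1) * (p o2 o1 o2) * (p o2 o2 o2) * a8 * b4 * b6 * s - (p o1 o2 o1) * (p o2 o1 o2) * (p o2 o2 o2) * a6 * b4 * b8 * s - (p o1 o2 o1) * (p o2 o1 o2) * (p o2 o2 o2) * a4 * b6 * b8 * s - (p o1 o2 o1) * (p o2 o1 o2) * (p o2 o2 o1) * b4 * b6 * b9 * t - (p o1 o2 o1) * (p o2 o1 o2) * (p o2 o2 o1) * a9 * b4 * b6 * s - (p o1 o2 o1) * (p o2 o1 o2) * (p o2 o2 o1) * a6 * b4 * b9 * s - (p o1 o2 o1) * (p o2 o1 o2) * (p o2 o2 o1) * a4 * b6 * b9 * s + (p o1 o2 o1) * (p o2 o1 o2)^+2 * b4 * b7 * b8 * t + (p o1 o2 o1) * (p o2 o1 o2)^+2 * a8 * b4 * b7 * s + (p o1 o2 o1) * (p o2 o1 o2)^+2 * a7 * b4 * b8 * s + (p o1 o2 o1) * (p o2 o1 o2)^+2 * a4 * b7 * b8 * s - (p o1 o2 o1) * (p o2 o1 o1) * b9^+2 - (p o1 o2 o1) * (p o2 o1 o1) * b3 * b9^+2 * t - 2%:R * (p o1 o2 o1) * (p o2 o1 o1) * a9 * b3 * b9 * s - (p o1 o2 o1) * (p o2 o1 o1) * a3 * b9^+2 * s + 2%:R * (p o1 o2 o1) * (p o2 o1 o1) * (p o2 o2 o2) * b4 * b6 * b9 * t + 2%:R * (p o1 o2 o1) * (p o2 o1 o1) * (p o2 o2 o2) * a9 * b4 * b6 * s + 2%:R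 * (p o1 o2 o1) * (p o2 o1 o1) * (p o2 o2 o2) * a6 * b4 * b9 * s + 2%:R * (p o1 o2 o1) * (p o2 o1 o1) * (p o2 o2 o2) * a4 * b6 * b9 * s - (p o1 o2 o1) * (p o2 o1 o1) * (p o2 o1 o2) * b4 * b7 * b9 * t - (p o1 o2 o1) * (p o2 o1 o1) * (p o2 o1 o2) * a9 * b4 * b7 * s - (p o1 o2 o1) * (p o2 o1 o1) * (p o2 o1 o2) * a7 * b4 * b9 * s - (p o1 o2 o1) * (p o2 o1 o1) * (p o2 o1 o2) * a4 * b7 * b9 * s - (p o1 o2 o1) * (p o1 o2 o2) * (p o2 o1 o2) * b5 * b6 * b8 * t - (p o1 o2 o1) * (p o1 o2 o2) * (p o2 o1 o2) * a8 * b5 * b6 * s - (p o1 o2 o1) * (p o1 o2 o2) * (p o2 o1 o2) * a6 * b5 * b8 * s - (p o1 o2 o1) * (p o1 o2 o2) * (p o2 o1 o2) * a5 * b6 * b8 * s - (p o1 o2 o1) * (p o1 o2 o2) * (p o2 o1 o1) * b5 * b6 * b9 * t - (p o1 o2 o1) * (p o1 o2 o2) * (p o2 o1 o1) * a9 * b5 * b6 * s - (p o1 o2 o1) * (p o1 o2 o2) * (p o2 o1 o1) * a6 * b5 * b9 * s - (p o1 o2 o1) * (p o1 o2 o2) * (p o2 o1 o1) * a5 * b6 * b9 * s + (p o1 o2 o1)^+2 * (p o2 o1 o2) * b5 * b6 * b9 * t + (p o1 o2 o1)^+2 * (p o2 o1 o2) * a9 * b5 * b6 * s + (p o1 o2 o1)^+2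 * (p o2 o1 o2) * a6 * b5 * b9 * s + (p o1 o2 o1)^+2 * (p o2 o1 o2) * a5 * b6 * b9 * s + (p o1 o1 o2) * (p o2 o2 o2) * b8^+2 + (p o1 o1 o2) * (p o2 o2 o2) * b3 * b8^+2 * t + 2%:R * (p o1 o1 o2) * (p o2 o2 o2) * a8 * b3 * b8 * s + (p o1 o1 o2) * (p o2 o2 o2) * a3 * b8^+2 * s - (p o1 o1 o2) * (p o2 o2 o1) * b8 * b9 + (p o1 o1 o2) * (p o2 o2 o1) * b6 * b7 + (p o1 o1 o2) * (p o2 o2 o1) * b4 * b5 - (p o1 o1 o2) * (p o2 o2 o1) * b3 * b8 * b9 * t + (p o1 o1 o2) * (p o2 o2 o1) * b2 * b6 * b7 * t + (p o1 o1 o2) * (p o2 o2 o1) * b1 * b4 * b5 * t - (p o1 o1 o2) * (p o2 o2 o1) * a9 * b3 * b8 * s - (p o1 o1 o2) * (p o2 o2 o1) * a8 * b3 * b9 * s + (p o1 o1 o2) * (p o2 o2 o1) * a7 * b2 * b6 * s + (p o1 o1 o2) * (p o2 o2 o1) * a6 * b2 * b7 * s + (p o1 o1 o2) * (p o2 o2 o1) * a5 * b1 * b4 * s + (p o1 o1 o2) * (p o2 o2 o1) * a4 * b1 * b5 * s - (p o1 o1 o2) * (p o2 o2 o1) * a3 * b8 * b9 * s + (p o1 o1 o2) * (p o2 o2 o1) * a2 * b6 * b7 * s + (p o1 o1 o2) * (p o2 o2 o1) * a1 * b4 * b5 * s - (p o1 o1 o2) * (p o2 o2 o1) * (p o2 o2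 o2) * b4 * b6 * b8 * t - (p o1 o1 o2) * (p o2 o2 o1) * (p o2 o2 o2) * a8 * b4 * b6 * s - (p o1 o1 o2) * (p o2 o2 o1) * (p o2 o2 o2) * a6 * b4 * b8 * s - (p o1 o1 o2) * (p o2 o2 o1) * (p o2 o2 o2) * a4 * b6 * b8 * s + (p o1 o1 o2) * (p o2 o2 o1)^+2 * b4 * b6 * b9 * t + (p o1 o1 o2) * (p o2 o2 o1)^+2 * a9 * b4 * b6 * s + (p o1 o1 o2) * (p o2 o2 o1)^+2 * a6 * b4 * b9 * s + (p o1 o1 o2) * (p o2 o2 o1)^+2 * a4 * b6 * b9 * s - (p o1 o1 o2) * (p o2 o1 o2) * (p o2 o2 o1) * b4 * b7 * b8 * t - (p o1 o1 o2) * (p o2 o1 o2) * (p o2 o2 o1) * a8 * b4 * b7 * s - (p o1 o1 o2) * (p o2 o1 o2) * (p o2 o2 o1) * a7 * b4 * b8 * s - (p o1 o1 o2) * (p o2 o1 o2) * (p o2 o2 o1) * a4 * b7 * b8 * s - (p o1 o1 o2) * (p o2 o1 o1) * b7^+2 - (p o1 o1 o2) * (p o2 o1 o1) * b2 * b7^+2 * t - 2%:R * (p o1 o1 o2) * (p o2 o1 o1) * a7 * b2 * b7 * s - (p o1 o1 o2) * (p o2 o1 o1) * a2 * b7^+2 * s + 2%:R * (p o1 o1 o2) * (p o2 o1 o1) * (p o2 o2 o2) * b4 * b7 * b8 * t + 2%:R * (p o1 o1 o2) * (p o2 o1 o1) * (p o2 o2 o2) * a8 * b4 * b7 * s + 2%:R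 * (p o1 o1 o2) * (p o2 o1 o1) * (p o2 o2 o2) * a7 * b4 * b8 * s + 2%:R * (p o1 o1 o2) * (p o2 o1 o1) * (p o2 o2 o2) * a4 * b7 * b8 * s - (p o1 o1 o2) * (p o2 o1 o1) * (p o2 o2 o1) * b4 * b7 * b9 * t - (p o1 o1 o2) * (p o2 o1 o1) * (p o2 o2 o1) * a9 * b4 * b7 * s - (p o1 o1 o2) * (p o2 o1 o1) * (p o2 o2 o1) * a7 * b4 * b9 * s - (p o1 o1 o2) * (p o2 o1 o1) * (p o2 o2 o1) * a4 * b7 * b9 * s - (p o1 o1 o2) * (p o1 o2 o2) * (p o2 o2 o1) * b5 * b6 * b8 * t - (p o1 o1 o2) * (p o1 o2 o2) * (p o2 o2 o1) * a8 * b5 * b6 * s - (p o1 o1 o2) * (p o1 o2 o2) * (p o2 o2 o1) * a6 * b5 * b8 * s - (p o1 o1 o2) * (p o1 o2 o2) * (p o2 o2 o1) * a5 * b6 * b8 * s - (p o1 o1 o2) * (p o1 o2 o2) * (p o2 o1 o1) * b5 * b7 * b8 * t - (p o1 o1 o2) * (p o1 o2 o2) * (p o2 o1 o1) * a8 * b5 * b7 * s - (p o1 o1 o2) * (p o1 o2 o2) * (p o2 o1 o1) * a7 * b5 * b8 * s - (p o1 o1 o2) * (p o1 o2 o2) * (p o2 o1 o1) * a5 * b7 * b8 * s - (p o1 o1 o2) * (p o1 o2 o1) * b5^+2 - (p o1 o1 o2) * (p o1 o2 o1) * b1 * b5^+2 * t - 2%:R * (p o1 o1 o2) * (p o1 o2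 o1) * a5 * b1 * b5 * s - (p o1 o1 o2) * (p o1 o2 o1) * a1 * b5^+2 * s + 2%:R * (p o1 o1 o2) * (p o1 o2 o1) * (p o2 o2 o2) * b5 * b6 * b8 * t + 2%:R * (p o1 o1 o2) * (p o1 o2 o1) * (p o2 o2 o2) * a8 * b5 * b6 * s + 2%:R * (p o1 o1 o2) * (p o1 o2 o1) * (p o2 o2 o2) * a6 * b5 * b8 * s + 2%:R * (p o1 o1 o2) * (p o1 o2 o1) * (p o2 o2 o2) * a5 * b6 * b8 * s - (p o1 o1 o2) * (p o1 o2 o1) * (p o2 o2 o1) * b5 * b6 * b9 * t - (p o1 o1 o2) * (p o1 o2 o1) * (p o2 o2 o1) * a9 * b5 * b6 * s - (p o1 o1 o2) * (p o1 o2 o1) * (p o2 o2 o1) * a6 * b5 * b9 * s - (p o1 o1 o2) * (p o1 o2 o1) * (p o2 o2 o1) * a5 * b6 * b9 * s - (p o1 o1 o2) * (p o1 o2 o1) * (p o2 o1 o2) * b5 * b7 * b8 * t - (p o1 o1 o2) * (p o1 o2 o1) * (p o2 o1 o2) * a8 * b5 * b7 * s - (p o1 o1 o2) * (p o1 o2 o1) * (p o2 o1 o2) * a7 * b5 * b8 * s - (p o1 o1 o2) * (p o1 o2 o1) * (p o2 o1 o2) * a5 * b7 * b8 * s + 2%:R * (p o1 o1 o2) * (p o1 o2 o1) * (p o2 o1 o1) * b5 * b7 * b9 * t + 2%:R * (p o1 o1 o2) * (p o1 o2 o1) * (p o2 o1 o1) * a9 * b5 * b7 * s + 2%:R * (p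 o1 o1 o2) * (p o1 o2 o1) * (p o2 o1 o1) * a7 * b5 * b9 * s + 2%:R * (p o1 o1 o2) * (p o1 o2 o1) * (p o2 o1 o1) * a5 * b7 * b9 * s + (p o1 o1 o2)^+2 * (p o2 o2 o1) * b5 * b7 * b8 * t + (p o1 o1 o2)^+2 * (p o2 o2 o1) * a8 * b5 * b7 * s + (p o1 o1 o2)^+2 * (p o2 o2 o1) * a7 * b5 * b8 * s + (p o1 o1 o2)^+2 * (p o2 o2 o1) * a5 * b7 * b8 * s - (p o1 o1 o1) * (p o2 o2 o2) * b8 * b9 - (p o1 o1 o1) * (p o2 o2 o2) * b6 * b7 - (p o1 o1 o1) * (p o2 o2 o2) * b4 * b5 - (p o1 o1 o1) * (p o2 o2 o2) * b3 * b8 * b9 * t - (p o1 o1 o1) * (p o2 o2 o2) * b2 * b6 * b7 * t - (p o1 o1 o1) * (p o2 o2 o2) * b1 * b4 * b5 * t - (p o1 o1 o1) * (p o2 o2 o2) * a9 * b3 * b8 * s - (p o1 o1 o1) * (p o2 o2 o2) * a8 * b3 * b9 * s - (p o1 o1 o1) * (p o2 o2 o2) * a7 * b2 * b6 * s - (p o1 o1 o1) * (p o2 o2 o2) * a6 * b2 * b7 * s - (p o1 o1 o1) * (p o2 o2 o2) * a5 * b1 * b4 * s - (p o1 o1 o1) * (p o2 o2 o2) * a4 * b1 * b5 * s - (p o1 o1 o1) * (p o2 o2 o2) * a3 * b8 * b9 * s - (p o1 o1 o1) * (p o2 o2 o2) * a2 * b6 * b7 * s - (p o1 o1 o1) * (p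 o2 o2 o2) * a1 * b4 * b5 * s + (p o1 o1 o1) * (p o2 o2 o2)^+2 * b4 * b6 * b8 * t + (p o1 o1 o1) * (p o2 o2 o2)^+2 * a8 * b4 * b6 * s + (p o1 o1 o1) * (p o2 o2 o2)^+2 * a6 * b4 * b8 * s + (p o1 o1 o1) * (p o2 o2 o2)^+2 * a4 * b6 * b8 * s + (p o1 o1 o1) * (p o2 o2 o1) * b9^+2 + (p o1 o1 o1) * (p o2 o2 o1) * b3 * b9^+2 * t + 2%:R * (p o1 o1 o1) * (p o2 o2 o1) * a9 * b3 * b9 * s + (p o1 o1 o1) * (p o2 o2 o1) * a3 * b9^+2 * s - (p o1 o1 o1) * (p o2 o2 o1) * (p o2 o2 o2) * b4 * b6 * b9 * t - (p o1 o1 o1) * (p o2 o2 o1) * (p o2 o2 o2) * a9 * b4 * b6 * s - (p o1 o1 o1) * (p o2 o2 o1) * (p o2 o2 o2) * a6 * b4 * b9 * s - (p o1 o1 o1) * (p o2 o2 o1) * (p o2 o2 o2) * a4 * b6 * b9 * s + (p o1 o1 o1) * (p o2 o1 o2) * b7^+2 + (p o1 o1 o1) * (p o2 o1 o2) * b2 * b7^+2 * t + 2%:R * (p o1 o1 o1) * (p o2 o1 o2) * a7 * b2 * b7 * s + (p o1 o1 o1) * (p o2 o1 o2) * a2 * b7^+2 * s - (p o1 o1 o1) * (p o2 o1 o2) * (p o2 o2 o2) * b4 * b7 * b8 * t - (p o1 o1 o1) * (p o2 o1 o2) * (p o2 o2 o2) * a8 * b4 * b7 * s - (p o1 o1 o1)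 * (p o2 o1 o2) * (p o2 o2 o2) * a7 * b4 * b8 * s - (p o1 o1 o1) * (p o2 o1 o2) * (p o2 o2 o2) * a4 * b7 * b8 * s + 2%:R * (p o1 o1 o1) * (p o2 o1 o2) * (p o2 o2 o1) * b4 * b7 * b9 * t + 2%:R * (p o1 o1 o1) * (p o2 o1 o2) * (p o2 o2 o1) * a9 * b4 * b7 * s + 2%:R * (p o1 o1 o1) * (p o2 o1 o2) * (p o2 o2 o1) * a7 * b4 * b9 * s + 2%:R * (p o1 o1 o1) * (p o2 o1 o2) * (p o2 o2 o1) * a4 * b7 * b9 * s - (p o1 o1 o1) * (p o2 o1 o1) * (p o2 o2 o2) * b4 * b7 * b9 * t - (p o1 o1 o1) * (p o2 o1 o1) * (p o2 o2 o2) * a9 * b4 * b7 * s - (p o1 o1 o1) * (p o2 o1 o1) * (p o2 o2 o2) * a7 * b4 * b9 * s - (p o1 o1 o1) * (p o2 o1 o1) * (p o2 o2 o2) * a4 * b7 * b9 * s + (p o1 o1 o1) * (p o1 o2 o2) * b5^+2 + (p o1 o1 o1) * (p o1 o2 o2) * b1 * b5^+2 * t + 2%:R * (p o1 o1 o1) * (p o1 o2 o2) * a5 * b1 * b5 * s + (p o1 o1 o1) * (p o1 o2 o2) * a1 * b5^+2 * s - (p o1 o1 o1) * (p o1 o2 o2) * (p o2 o2 o2) * b5 * b6 * b8 * t - (p o1 o1 o1) * (p o1 o2 o2) * (p o2 o2 o2) * a8 * b5 * b6 * s - (p o1 o1 o1) * (p o1 o2 o2) * (p o2 o2 o2) * a6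 * b5 * b8 * s - (p o1 o1 o1) * (p o1 o2 o2) * (p o2 o2 o2) * a5 * b6 * b8 * s + 2%:R * (p o1 o1 o1) * (p o1 o2 o2) * (p o2 o2 o1) * b5 * b6 * b9 * t + 2%:R * (p o1 o1 o1) * (p o1 o2 o2) * (p o2 o2 o1) * a9 * b5 * b6 * s + 2%:R * (p o1 o1 o1) * (p o1 o2 o2) * (p o2 o2 o1) * a6 * b5 * b9 * s + 2%:R * (p o1 o1 o1) * (p o1 o2 o2) * (p o2 o2 o1) * a5 * b6 * b9 * s + 2%:R * (p o1 o1 o1) * (p o1 o2 o2) * (p o2 o1 o2) * b5 * b7 * b8 * t + 2%:R * (p o1 o1 o1) * (p o1 o2 o2) * (p o2 o1 o2) * a8 * b5 * b7 * s + 2%:R * (p o1 o1 o1) * (p o1 o2 o2) * (p o2 o1 o2) * a7 * b5 * b8 * s + 2%:R * (p o1 o1 o1) * (p o1 o2 o2) * (p o2 o1 o2) * a5 * b7 * b8 * s - (p o1 o1 o1) * (p o1 o2 o2) * (p o2 o1 o1) * b5 * b7 * b9 * t - (p o1 o1 o1) * (p o1 o2 o2) * (p o2 o1 o1) * a9 * b5 * b7 * s - (p o1 o1 o1) * (p o1 o2 o2) * (p o2 o1 o1) * a7 * b5 * b9 * s - (p o1 o1 o1) * (p o1 o2 o2) * (p o2 o1 o1) * a5 * b7 * b9 * s - (p o1 o1 o1) * (p o1 o2 o1) * (p o2 o2 o2) * b5 * b6 * b9 * t - (p o1 o1 o1) * (p o1 o2 o1) * (p o2 o2 o2) * a9 *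 b5 * b6 * s - (p o1 o1 o1) * (p o1 o2 o1) * (p o2 o2 o2) * a6 * b5 * b9 * s - (p o1 o1 o1) * (p o1 o2 o1) * (p o2 o2 o2) * a5 * b6 * b9 * s - (p o1 o1 o1) * (p o1 o2 o1) * (p o2 o1 o2) * b5 * b7 * b9 * t - (p o1 o1 o1) * (p o1 o2 o1) * (p o2 o1 o2) * a9 * b5 * b7 * s - (p o1 o1 o1) * (p o1 o2 o1) * (p o2 o1 o2) * a7 * b5 * b9 * s - (p o1 o1 o1) * (p o1 o2 o1) * (p o2 o1 o2) * a5 * b7 * b9 * s - (p o1 o1 o1) * (p o1 o1 o2) * (p o2 o2 o2) * b5 * b7 * b8 * t - (p o1 o1 o1) * (p o1 o1 o2) * (p o2 o2 o2) * a8 * b5 * b7 * s - (p o1 o1 o1) * (p o1 o1 o2) * (p o2 o2 o2) * a7 * b5 * b8 * s - (p o1 o1 o1) * (p o1 o1 o2) * (p o2 o2 o2) * a5 * b7 * b8 * s - (p o1 o1 o1) * (p o1 o1 o2) * (p o2 o2 o1) * b5 * b7 * b9 * t - (p o1 o1 o1) * (p o1 o1 o2) * (p o2 o2 o1) * a9 * b5 * b7 * s - (p o1 o1 o1) * (p o1 o1 o2) * (p o2 o2 o1) * a7 * b5 * b9 * s - (p o1 o1 o1) * (p o1 o1 o2) * (p o2 o2 o1) * a5 * b7 * b9 * s + (p o1 o1 o1)^+2 * (p o2 o2 o2) * b5 * b7 * b9 * t + (p o1 o1 o1)^+2 * (p o2 o2 o2) * a9 * b5 * b7 * s + (p o1 o1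 o1)^+2 * (p o2 o2 o2) * a7 * b5 * b9 * s + (p o1 o1 o1)^+2 * (p o2 o2 o2) * a5 * b7 * b9 * s).
Definition NE : ex := A (A (A (A (A (A (A (A (A (A (A (A (A (A (A (A (A (A (A (A (A (A (A (A (A (A (A (A (A (A (A (A (A (A (A (A (A (A (A (A (A (A (A (A (A (A (A (A (A (A (A (A (A (A (A (A (A (A (A (A (A (A (A (A (M (M (V 8) (V 9)) (V 10)) (N (M (M (M (M (V 5) (V 6)) (V 8)) (V 11)) (V 11)))) (M (M (M (M (V 4) (V 7)) (V 8)) (V 11)) (V 11))) (N (M (M (M (M (V 3) (V 6)) (V 9)) (V 13)) (V 13)))) (N (M (M (M (M (V 3) (V 5)) (V 10)) (V 15)) (V 15)))) (M (M (M (M (M (M (C 2) (V 3)) (V 5)) (V 6)) (V 11)) (V 13)) (V 15))) (M (M (M (M (V 3) (V 4)) (V 10)) (V 15)) (V 16))) (M (M (M (M (V 3) (V 4)) (V 9)) (V 13)) (V 14))) (N (M (M (M (M (V 3) (V 4)) (V 8)) (V 11)) (V 12)))) (N (M (M (M (M (M (V 3) (V 4)) (V 7)) (V 11)) (V 13)) (V 15)))) (N (M (M (M (M (M (V 3) (V 4)) (V 6)) (V 11)) (V 13)) (V 16)))) (N (M (M (M (M (M (V 3) (V 4)) (V 5)) (V 11)) (V 14)) (V 15)))) (M (M (M (M (M (V 3) (V 4)) (V 4)) (V 11)) (V 14)) (V 16))) (M (M (M (M (M (V 3) (V 3)) (V 4)) (V 12)) (V 13)) (V 15))) (M (M (M (M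 (V 2) (V 7)) (V 9)) (V 13)) (V 13))) (M (M (M (M (V 2) (V 5)) (V 10)) (V 15)) (V 16))) (N (M (M (M (M (V 2) (V 5)) (V 9)) (V 13)) (V 14)))) (M (M (M (M (V 2) (V 5)) (V 8)) (V 11)) (V 12))) (N (M (M (M (M (M (V 2) (V 5)) (V 7)) (V 11)) (V 13)) (V 15)))) (N (M (M (M (M (M (V 2) (V 5)) (V 6)) (V 11)) (V 13)) (V 16)))) (M (M (M (M (M (V 2) (V 5)) (V 5)) (V 11)) (V 14)) (V 15))) (N (M (M (M (M (V 2) (V 4)) (V 10)) (V 16)) (V 16)))) (M (M (M (M (M (M (C 2) (V 2)) (V 4)) (V 7)) (V 11)) (V 13)) (V 16))) (N (M (M (M (M (M (V 2) (V 4)) (V 5)) (V 11)) (V 14)) (V 16)))) (N (M (M (M (M (M (V 2) (V 3)) (V 5)) (V 12)) (V 13)) (V 15)))) (N (M (M (M (M (M (V 2) (V 3)) (V 4)) (V 12)) (V 13)) (V 16)))) (M (M (M (M (M (V 2) (V 2)) (V 5)) (V 12)) (V 13)) (V 16))) (M (M (M (M (V 1) (V 7)) (V 10)) (V 15)) (V 15))) (N (M (M (M (M (V 1) (V 6)) (V 10)) (V 15)) (V 16)))) (M (M (M (M (V 1) (V 6)) (V 9)) (V 13)) (V 14))) (M (M (M (M (V 1) (V 6)) (V 8)) (V 11)) (V 12))) (N (M (M (M (M (M (V 1) (V 6)) (V 7)) (V 11)) (V 13)) (V 15)))) (M (M (M (M (M (V 1) (V 6)) (V 6)) (V 11)) (V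 13)) (V 16))) (N (M (M (M (M (M (V 1) (V 5)) (V 6)) (V 11)) (V 14)) (V 15)))) (N (M (M (M (M (V 1) (V 4)) (V 9)) (V 14)) (V 14)))) (M (M (M (M (M (M (C 2) (V 1)) (V 4)) (V 7)) (V 11)) (V 14)) (V 15))) (N (M (M (M (M (M (V 1) (V 4)) (V 6)) (V 11)) (V 14)) (V 16)))) (N (M (M (M (M (M (V 1) (V 3)) (V 6)) (V 12)) (V 13)) (V 15)))) (N (M (M (M (M (M (V 1) (V 3)) (V 4)) (V 12)) (V 14)) (V 15)))) (N (M (M (M (M (V 1) (V 2)) (V 8)) (V 12)) (V 12)))) (M (M (M (M (M (M (C 2) (V 1)) (V 2)) (V 7)) (V 12)) (V 13)) (V 15))) (N (M (M (M (M (M (V 1) (V 2)) (V 6)) (V 12)) (V 13)) (V 16)))) (N (M (M (M (M (M (V 1) (V 2)) (V 5)) (V 12)) (V 14)) (V 15)))) (M (M (M (M (M (M (C 2) (V 1)) (V 2)) (V 4)) (V 12)) (V 14)) (V 16))) (M (M (M (M (M (V 1) (V 1)) (V 6)) (V 12)) (V 14)) (V 15))) (N (M (M (M (M (V 0) (V 7)) (V 10)) (V 15)) (V 16)))) (N (M (M (M (M (V 0) (V 7)) (V 9)) (V 13)) (V 14)))) (N (M (M (M (M (V 0) (V 7)) (V 8)) (V 11)) (V 12)))) (M (M (M (M (M (V 0) (V 7)) (V 7)) (V 11)) (V 13)) (V 15))) (M (M (M (M (V 0) (V 6)) (V 10)) (V 16)) (V 16))) (N (M (M (M (M (M (V 0)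 (V 6)) (V 7)) (V 11)) (V 13)) (V 16)))) (M (M (M (M (V 0) (V 5)) (V 9)) (V 14)) (V 14))) (N (M (M (M (M (M (V 0) (V 5)) (V 7)) (V 11)) (V 14)) (V 15)))) (M (M (M (M (M (M (C 2) (V 0)) (V 5)) (V 6)) (V 11)) (V 14)) (V 16))) (N (M (M (M (M (M (V 0) (V 4)) (V 7)) (V 11)) (V 14)) (V 16)))) (M (M (M (M (V 0) (V 3)) (V 8)) (V 12)) (V 12))) (N (M (M (M (M (M (V 0) (V 3)) (V 7)) (V 12)) (V 13)) (V 15)))) (M (M (M (M (M (M (C 2) (V 0)) (V 3)) (V 6)) (V 12)) (V 13)) (V 16))) (M (M (M (M (M (M (C 2) (V 0)) (V 3)) (V 5)) (V 12)) (V 14)) (V 15))) (N (M (M (M (M (M (V 0) (V 3)) (V 4)) (V 12)) (V 14)) (V 16)))) (N (M (M (M (M (M (V 0) (V 2)) (V 7)) (V 12)) (V 13)) (V 16)))) (N (M (M (M (M (M (V 0) (V 2)) (V 5)) (V 12)) (V 14)) (V 16)))) (N (M (M (M (M (M (V 0) (V 1)) (V 7)) (V 12)) (V 14)) (V 15)))) (N (M (M (M (M (M (V 0) (V 1)) (V 6)) (V 12)) (V 14)) (V 16)))) (M (M (M (M (M (V 0) (V 0)) (V 7)) (V 12)) (V 14)) (V 16)).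
Definition QE : ex := A (A (A (A (A (A (A (A (A (A (A (A (A (A (A (A (A (A (A (A (A (A (A (A (A (A (A (A (A (A (A (A (A (A (A (A (A (A (A (A (A (M (V 10) (V 18)) (M (V 10) (V 17))) (M (V 9) (V 19))) (M (V 9) (V 17))) (M (V 8) (V 19))) (M (V 8) (V 18))) (N (M (M (M (M (C 2) (V 5)) (V 6)) (V 11)) (V 20)))) (M (M (M (M (C 2) (V 4)) (V 7)) (V 11)) (V 20))) (N (M (M (M (M (C 2) (V 3)) (V 6)) (V 13)) (V 22)))) (N (M (M (M (M (C 2) (V 3)) (V 5)) (V 15)) (V 24)))) (M (M (M (V 3) (V 4)) (V 16)) (V 24))) (M (M (M (V 3) (V 4)) (V 15)) (V 25))) (M (M (M (V 3) (V 4)) (V 14)) (V 22))) (M (M (M (V 3) (V 4)) (V 13)) (V 23))) (N (M (M (M (V 3) (V 4)) (V 12)) (V 20)))) (N (M (M (M (V 3) (V 4)) (V 11)) (V 21)))) (M (M (M (M (C 2) (V 2)) (V 7)) (V 13)) (V 22))) (M (M (M (V 2) (V 5)) (V 16)) (V 24))) (M (M (M (V 2) (V 5)) (V 15)) (V 25))) (N (M (M (M (V 2) (V 5)) (V 14)) (V 22)))) (N (M (M (M (V 2) (V 5)) (V 13)) (V 23)))) (M (M (M (V 2) (V 5)) (V 12)) (V 20))) (M (M (M (V 2) (V 5)) (V 11)) (V 21))) (N (M (M (M (M (C 2) (V 2)) (V 4)) (V 16)) (V 25)))) (M (M (M (M (C 2) (V 1)) (V 7)) (V 15)) (V 24)))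 (N (M (M (M (V 1) (V 6)) (V 16)) (V 24)))) (N (M (M (M (V 1) (V 6)) (V 15)) (V 25)))) (M (M (M (V 1) (V 6)) (V 14)) (V 22))) (M (M (M (V 1) (V 6)) (V 13)) (V 23))) (M (M (M (V 1) (V 6)) (V 12)) (V 20))) (M (M (M (V 1) (V 6)) (V 11)) (V 21))) (N (M (M (M (M (C 2) (V 1)) (V 4)) (V 14)) (V 23)))) (N (M (M (M (M (C 2) (V 1)) (V 2)) (V 12)) (V 21)))) (N (M (M (M (V 0) (V 7)) (V 16)) (V 24)))) (N (M (M (M (V 0) (V 7)) (V 15)) (V 25)))) (N (M (M (M (V 0) (V 7)) (V 14)) (V 22)))) (N (M (M (M (V 0) (V 7)) (V 13)) (V 23)))) (N (M (M (M (V 0) (V 7)) (V 12)) (V 20)))) (N (M (M (M (V 0) (V 7)) (V 11)) (V 21)))) (M (M (M (M (C 2) (V 0)) (V 6)) (V 16)) (V 25))) (M (M (M (M (C 2) (V 0)) (V 5)) (V 14)) (V 23))) (M (M (M (M (C 2) (V 0)) (V 3)) (V 12)) (V 21)).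
Definition WE : ex := A (A (A (A (A (A (A (A (A (A (A (A (A (A (A (A (A (A (A (A (A (A (A (A (A (A (A (A (A (A (A (A (A (A (A (A (A (A (A (A (A (A (A (A (A (A (A (A (A (A (A (A (A (A (A (A (A (A (A (A (A (A (A (A (A (A (A (A (A (A (A (A (A (A (A (A (A (A (A (A (A (A (A (A (A (A (A (A (A (A (A (A (A (A (A (A (A (A (A (A (A (A (A (A (A (A (A (A (A (A (A (A (A (A (A (A (A (A (A (A (A (A (A (A (A (A (A (A (A (A (A (A (A (A (A (A (A (A (A (A (A (A (A (A (A (A (A (A (A (A (A (A (A (A (A (A (A (A (A (A (A (A (A (A (A (A (A (A (A (A (A (A (A (A (A (A (A (A (A (A (A (A (M (M (V 9) (V 10)) (V 17)) (M (M (V 8) (V 10)) (V 18))) (M (M (V 8) (V 9)) (V 19))) (N (M (M (M (M (V 5) (V 6)) (V 11)) (V 11)) (V 17)))) (N (M (M (M (M (M (C 2) (V 5)) (V 6)) (V 8)) (V 11)) (V 20)))) (M (M (M (M (V 4) (V 7)) (V 11)) (V 11)) (V 17))) (M (M (M (M (M (C 2) (V 4)) (V 7)) (V 8)) (V 11)) (V 20))) (N (M (M (M (M (V 3) (V 6)) (V 13)) (V 13)) (V 18)))) (N (M (M (M (M (M (C 2) (V 3)) (V 6)) (V 9)) (V 13)) (V 22)))) (N (M (M (M (M (V 3) (V 5)) (V 15)) (V 15)) (V 19)))) (N (M (M (M (M (M (C 2) (V 3)) (V 5)) (V 10)) (V 15)) (V 24)))) (M (M (M (M (M (M (C 2) (V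 3)) (V 5)) (V 6)) (V 13)) (V 15)) (V 20))) (M (M (M (M (M (M (C 2) (V 3)) (V 5)) (V 6)) (V 11)) (V 15)) (V 22))) (M (M (M (M (M (M (C 2) (V 3)) (V 5)) (V 6)) (V 11)) (V 13)) (V 24))) (M (M (M (M (V 3) (V 4)) (V 15)) (V 16)) (V 19))) (M (M (M (M (V 3) (V 4)) (V 13)) (V 14)) (V 18))) (N (M (M (M (M (V 3) (V 4)) (V 11)) (V 12)) (V 17)))) (M (M (M (M (V 3) (V 4)) (V 10)) (V 16)) (V 24))) (M (M (M (M (V 3) (V 4)) (V 10)) (V 15)) (V 25))) (M (M (M (M (V 3) (V 4)) (V 9)) (V 14)) (V 22))) (M (M (M (M (V 3) (V 4)) (V 9)) (V 13)) (V 23))) (N (M (M (M (M (V 3) (V 4)) (V 8)) (V 12)) (V 20)))) (N (M (M (M (M (V 3) (V 4)) (V 8)) (V 11)) (V 21)))) (N (M (M (M (M (M (V 3) (V 4)) (V 7)) (V 13)) (V 15)) (V 20)))) (N (M (M (M (M (M (V 3) (V 4)) (V 7)) (V 11)) (V 15)) (V 22)))) (N (M (M (M (M (M (V 3) (V 4)) (V 7)) (V 11)) (V 13)) (V 24)))) (N (M (M (M (M (M (V 3) (V 4)) (V 6)) (V 13)) (V 16)) (V 20)))) (N (M (M (M (M (M (V 3) (V 4)) (V 6)) (V 11)) (V 16)) (V 22)))) (N (M (M (M (M (M (V 3) (V 4)) (V 6)) (V 11)) (V 13)) (V 25)))) (N (M (M (M (M (M (V 3) (V 4)) (V 5)) (V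 14)) (V 15)) (V 20)))) (N (M (M (M (M (M (V 3) (V 4)) (V 5)) (V 11)) (V 15)) (V 23)))) (N (M (M (M (M (M (V 3) (V 4)) (V 5)) (V 11)) (V 14)) (V 24)))) (M (M (M (M (M (V 3) (V 4)) (V 4)) (V 14)) (V 16)) (V 20))) (M (M (M (M (M (V 3) (V 4)) (V 4)) (V 11)) (V 16)) (V 23))) (M (M (M (M (M (V 3) (V 4)) (V 4)) (V 11)) (V 14)) (V 25))) (M (M (M (M (M (V 3) (V 3)) (V 4)) (V 13)) (V 15)) (V 21))) (M (M (M (M (M (V 3) (V 3)) (V 4)) (V 12)) (V 15)) (V 22))) (M (M (M (M (M (V 3) (V 3)) (V 4)) (V 12)) (V 13)) (V 24))) (M (M (M (M (V 2) (V 7)) (V 13)) (V 13)) (V 18))) (M (M (M (M (M (C 2) (V 2)) (V 7)) (V 9)) (V 13)) (V 22))) (M (M (M (M (V 2) (V 5)) (V 15)) (V 16)) (V 19))) (N (M (M (M (M (V 2) (V 5)) (V 13)) (V 14)) (V 18)))) (M (M (M (M (V 2) (V 5)) (V 11)) (V 12)) (V 17))) (M (M (M (M (V 2) (V 5)) (V 10)) (V 16)) (V 24))) (M (M (M (M (V 2) (V 5)) (V 10)) (V 15)) (V 25))) (N (M (M (M (M (V 2) (V 5)) (V 9)) (V 14)) (V 22)))) (N (M (M (M (M (V 2) (V 5)) (V 9)) (V 13)) (V 23)))) (M (M (M (M (V 2) (V 5)) (V 8)) (V 12)) (V 20))) (M (M (M (M (V 2) (V 5)) (V 8)) (V 11))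 (V 21))) (N (M (M (M (M (M (V 2) (V 5)) (V 7)) (V 13)) (V 15)) (V 20)))) (N (M (M (M (M (M (V 2) (V 5)) (V 7)) (V 11)) (V 15)) (V 22)))) (N (M (M (M (M (M (V 2) (V 5)) (V 7)) (V 11)) (V 13)) (V 24)))) (N (M (M (M (M (M (V 2) (V 5)) (V 6)) (V 13)) (V 16)) (V 20)))) (N (M (M (M (M (M (V 2) (V 5)) (V 6)) (V 11)) (V 16)) (V 22)))) (N (M (M (M (M (M (V 2) (V 5)) (V 6)) (V 11)) (V 13)) (V 25)))) (M (M (M (M (M (V 2) (V 5)) (V 5)) (V 14)) (V 15)) (V 20))) (M (M (M (M (M (V 2) (V 5)) (V 5)) (V 11)) (V 15)) (V 23))) (M (M (M (M (M (V 2) (V 5)) (V 5)) (V 11)) (V 14)) (V 24))) (N (M (M (M (M (V 2) (V 4)) (V 16)) (V 16)) (V 19)))) (N (M (M (M (M (M (C 2) (V 2)) (V 4)) (V 10)) (V 16)) (V 25)))) (M (M (M (M (M (M (C 2) (V 2)) (V 4)) (V 7)) (V 13)) (V 16)) (V 20))) (M (M (M (M (M (M (C 2) (V 2)) (V 4)) (V 7)) (V 11)) (V 16)) (V 22))) (M (M (M (M (M (M (C 2) (V 2)) (V 4)) (V 7)) (V 11)) (V 13)) (V 25))) (N (M (M (M (M (M (V 2) (V 4)) (V 5)) (V 14)) (V 16)) (V 20)))) (N (M (M (M (M (M (V 2) (V 4)) (V 5)) (V 11)) (V 16)) (V 23)))) (N (M (M (M (M (M (V 2) (V 4)) (V 5))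 (V 11)) (V 14)) (V 25)))) (N (M (M (M (M (M (V 2) (V 3)) (V 5)) (V 13)) (V 15)) (V 21)))) (N (M (M (M (M (M (V 2) (V 3)) (V 5)) (V 12)) (V 15)) (V 22)))) (N (M (M (M (M (M (V 2) (V 3)) (V 5)) (V 12)) (V 13)) (V 24)))) (N (M (M (M (M (M (V 2) (V 3)) (V 4)) (V 13)) (V 16)) (V 21)))) (N (M (M (M (M (M (V 2) (V 3)) (V 4)) (V 12)) (V 16)) (V 22)))) (N (M (M (M (M (M (V 2) (V 3)) (V 4)) (V 12)) (V 13)) (V 25)))) (M (M (M (M (M (V 2) (V 2)) (V 5)) (V 13)) (V 16)) (V 21))) (M (M (M (M (M (V 2) (V 2)) (V 5)) (V 12)) (V 16)) (V 22))) (M (M (M (M (M (V 2) (V 2)) (V 5)) (V 12)) (V 13)) (V 25))) (M (M (M (M (V 1) (V 7)) (V 15)) (V 15)) (V 19))) (M (M (M (M (M (C 2) (V 1)) (V 7)) (V 10)) (V 15)) (V 24))) (N (M (M (M (M (V 1) (V 6)) (V 15)) (V 16)) (V 19)))) (M (M (M (M (V 1) (V 6)) (V 13)) (V 14)) (V 18))) (M (M (M (M (V 1) (V 6)) (V 11)) (V 12)) (V 17))) (N (M (M (M (M (V 1) (V 6)) (V 10)) (V 16)) (V 24)))) (N (M (M (M (M (V 1) (V 6)) (V 10)) (V 15)) (V 25)))) (M (M (M (M (V 1) (V 6)) (V 9)) (V 14)) (V 22))) (M (M (M (M (V 1) (V 6)) (V 9)) (V 13)) (V 23))) (M (M (M (M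 (V 1) (V 6)) (V 8)) (V 12)) (V 20))) (M (M (M (M (V 1) (V 6)) (V 8)) (V 11)) (V 21))) (N (M (M (M (M (M (V 1) (V 6)) (V 7)) (V 13)) (V 15)) (V 20)))) (N (M (M (M (M (M (V 1) (V 6)) (V 7)) (V 11)) (V 15)) (V 22)))) (N (M (M (M (M (M (V 1) (V 6)) (V 7)) (V 11)) (V 13)) (V 24)))) (M (M (M (M (M (V 1) (V 6)) (V 6)) (V 13)) (V 16)) (V 20))) (M (M (M (M (M (V 1) (V 6)) (V 6)) (V 11)) (V 16)) (V 22))) (M (M (M (M (M (V 1) (V 6)) (V 6)) (V 11)) (V 13)) (V 25))) (N (M (M (M (M (M (V 1) (V 5)) (V 6)) (V 14)) (V 15)) (V 20)))) (N (M (M (M (M (M (V 1) (V 5)) (V 6)) (V 11)) (V 15)) (V 23)))) (N (M (M (M (M (M (V 1) (V 5)) (V 6)) (V 11)) (V 14)) (V 24)))) (N (M (M (M (M (V 1) (V 4)) (V 14)) (V 14)) (V 18)))) (N (M (M (M (M (M (C 2) (V 1)) (V 4)) (V 9)) (V 14)) (V 23)))) (M (M (M (M (M (M (C 2) (V 1)) (V 4)) (V 7)) (V 14)) (V 15)) (V 20))) (M (M (M (M (M (M (C 2) (V 1)) (V 4)) (V 7)) (V 11)) (V 15)) (V 23))) (M (M (M (M (M (M (C 2) (V 1)) (V 4)) (V 7)) (V 11)) (V 14)) (V 24))) (N (M (M (M (M (M (V 1) (V 4)) (V 6)) (V 14)) (V 16)) (V 20)))) (N (M (M (M (M (M (V 1)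 (V 4)) (V 6)) (V 11)) (V 16)) (V 23)))) (N (M (M (M (M (M (V 1) (V 4)) (V 6)) (V 11)) (V 14)) (V 25)))) (N (M (M (M (M (M (V 1) (V 3)) (V 6)) (V 13)) (V 15)) (V 21)))) (N (M (M (M (M (M (V 1) (V 3)) (V 6)) (V 12)) (V 15)) (V 22)))) (N (M (M (M (M (M (V 1) (V 3)) (V 6)) (V 12)) (V 13)) (V 24)))) (N (M (M (M (M (M (V 1) (V 3)) (V 4)) (V 14)) (V 15)) (V 21)))) (N (M (M (M (M (M (V 1) (V 3)) (V 4)) (V 12)) (V 15)) (V 23)))) (N (M (M (M (M (M (V 1) (V 3)) (V 4)) (V 12)) (V 14)) (V 24)))) (N (M (M (M (M (V 1) (V 2)) (V 12)) (V 12)) (V 17)))) (N (M (M (M (M (M (C 2) (V 1)) (V 2)) (V 8)) (V 12)) (V 21)))) (M (M (M (M (M (M (C 2) (V 1)) (V 2)) (V 7)) (V 13)) (V 15)) (V 21))) (M (M (M (M (M (M (C 2) (V 1)) (V 2)) (V 7)) (V 12)) (V 15)) (V 22))) (M (M (M (M (M (M (C 2) (V 1)) (V 2)) (V 7)) (V 12)) (V 13)) (V 24))) (N (M (M (M (M (M (V 1) (V 2)) (V 6)) (V 13)) (V 16)) (V 21)))) (N (M (M (M (M (M (V 1) (V 2)) (V 6)) (V 12)) (V 16)) (V 22)))) (N (M (M (M (M (M (V 1) (V 2)) (V 6)) (V 12)) (V 13)) (V 25)))) (N (M (M (M (M (M (V 1) (V 2)) (V 5)) (V 14)) (V 15)) (V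 21)))) (N (M (M (M (M (M (V 1) (V 2)) (V 5)) (V 12)) (V 15)) (V 23)))) (N (M (M (M (M (M (V 1) (V 2)) (V 5)) (V 12)) (V 14)) (V 24)))) (M (M (M (M (M (M (C 2) (V 1)) (V 2)) (V 4)) (V 14)) (V 16)) (V 21))) (M (M (M (M (M (M (C 2) (V 1)) (V 2)) (V 4)) (V 12)) (V 16)) (V 23))) (M (M (M (M (M (M (C 2) (V 1)) (V 2)) (V 4)) (V 12)) (V 14)) (V 25))) (M (M (M (M (M (V 1) (V 1)) (V 6)) (V 14)) (V 15)) (V 21))) (M (M (M (M (M (V 1) (V 1)) (V 6)) (V 12)) (V 15)) (V 23))) (M (M (M (M (M (V 1) (V 1)) (V 6)) (V 12)) (V 14)) (V 24))) (N (M (M (M (M (V 0) (V 7)) (V 15)) (V 16)) (V 19)))) (N (M (M (M (M (V 0) (V 7)) (V 13)) (V 14)) (V 18)))) (N (M (M (M (M (V 0) (V 7)) (V 11)) (V 12)) (V 17)))) (N (M (M (M (M (V 0) (V 7)) (V 10)) (V 16)) (V 24)))) (N (M (M (M (M (V 0) (V 7)) (V 10)) (V 15)) (V 25)))) (N (M (M (M (M (V 0) (V 7)) (V 9)) (V 14)) (V 22)))) (N (M (M (M (M (V 0) (V 7)) (V 9)) (V 13)) (V 23)))) (N (M (M (M (M (V 0) (V 7)) (V 8)) (V 12)) (V 20)))) (N (M (M (M (M (V 0) (V 7)) (V 8)) (V 11)) (V 21)))) (M (M (M (M (M (V 0) (V 7)) (V 7)) (V 13)) (V 15)) (V 20)))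 (M (M (M (M (M (V 0) (V 7)) (V 7)) (V 11)) (V 15)) (V 22))) (M (M (M (M (M (V 0) (V 7)) (V 7)) (V 11)) (V 13)) (V 24))) (M (M (M (M (V 0) (V 6)) (V 16)) (V 16)) (V 19))) (M (M (M (M (M (C 2) (V 0)) (V 6)) (V 10)) (V 16)) (V 25))) (N (M (M (M (M (M (V 0) (V 6)) (V 7)) (V 13)) (V 16)) (V 20)))) (N (M (M (M (M (M (V 0) (V 6)) (V 7)) (V 11)) (V 16)) (V 22)))) (N (M (M (M (M (M (V 0) (V 6)) (V 7)) (V 11)) (V 13)) (V 25)))) (M (M (M (M (V 0) (V 5)) (V 14)) (V 14)) (V 18))) (M (M (M (M (M (C 2) (V 0)) (V 5)) (V 9)) (V 14)) (V 23))) (N (M (M (M (M (M (V 0) (V 5)) (V 7)) (V 14)) (V 15)) (V 20)))) (N (M (M (M (M (M (V 0) (V 5)) (V 7)) (V 11)) (V 15)) (V 23)))) (N (M (M (M (M (M (V 0) (V 5)) (V 7)) (V 11)) (V 14)) (V 24)))) (M (M (M (M (M (M (C 2) (V 0)) (V 5)) (V 6)) (V 14)) (V 16)) (V 20))) (M (M (M (M (M (M (C 2) (V 0)) (V 5)) (V 6)) (V 11)) (V 16)) (V 23))) (M (M (M (M (M (M (C 2) (V 0)) (V 5)) (V 6)) (V 11)) (V 14)) (V 25))) (N (M (M (M (M (M (V 0) (V 4)) (V 7)) (V 14)) (V 16)) (V 20)))) (N (M (M (M (M (M (V 0) (V 4)) (V 7)) (V 11)) (V 16)) (V 23)))) (N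 (M (M (M (M (M (V 0) (V 4)) (V 7)) (V 11)) (V 14)) (V 25)))) (M (M (M (M (V 0) (V 3)) (V 12)) (V 12)) (V 17))) (M (M (M (M (M (C 2) (V 0)) (V 3)) (V 8)) (V 12)) (V 21))) (N (M (M (M (M (M (V 0) (V 3)) (V 7)) (V 13)) (V 15)) (V 21)))) (N (M (M (M (M (M (V 0) (V 3)) (V 7)) (V 12)) (V 15)) (V 22)))) (N (M (M (M (M (M (V 0) (V 3)) (V 7)) (V 12)) (V 13)) (V 24)))) (M (M (M (M (M (M (C 2) (V 0)) (V 3)) (V 6)) (V 13)) (V 16)) (V 21))) (M (M (M (M (M (M (C 2) (V 0)) (V 3)) (V 6)) (V 12)) (V 16)) (V 22))) (M (M (M (M (M (M (C 2) (V 0)) (V 3)) (V 6)) (V 12)) (V 13)) (V 25))) (M (M (M (M (M (M (C 2) (V 0)) (V 3)) (V 5)) (V 14)) (V 15)) (V 21))) (M (M (M (M (M (M (C 2) (V 0)) (V 3)) (V 5)) (V 12)) (V 15)) (V 23))) (M (M (M (M (M (M (C 2) (V 0)) (V 3)) (V 5)) (V 12)) (V 14)) (V 24))) (N (M (M (M (M (M (V 0) (V 3)) (V 4)) (V 14)) (V 16)) (V 21)))) (N (M (M (M (M (M (V 0) (V 3)) (V 4)) (V 12)) (V 16)) (V 23)))) (N (M (M (M (M (M (V 0) (V 3)) (V 4)) (V 12)) (V 14)) (V 25)))) (N (M (M (M (M (M (V 0) (V 2)) (V 7)) (V 13)) (V 16)) (V 21)))) (N (M (M (M (M (M (V 0)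 (V 2)) (V 7)) (V 12)) (V 16)) (V 22)))) (N (M (M (M (M (M (V 0) (V 2)) (V 7)) (V 12)) (V 13)) (V 25)))) (N (M (M (M (M (M (V 0) (V 2)) (V 5)) (V 14)) (V 16)) (V 21)))) (N (M (M (M (M (M (V 0) (V 2)) (V 5)) (V 12)) (V 16)) (V 23)))) (N (M (M (M (M (M (V 0) (V 2)) (V 5)) (V 12)) (V 14)) (V 25)))) (N (M (M (M (M (M (V 0) (V 1)) (V 7)) (V 14)) (V 15)) (V 21)))) (N (M (M (M (M (M (V 0) (V 1)) (V 7)) (V 12)) (V 15)) (V 23)))) (N (M (M (M (M (M (V 0) (V 1)) (V 7)) (V 12)) (V 14)) (V 24)))) (N (M (M (M (M (M (V 0) (V 1)) (V 6)) (V 14)) (V 16)) (V 21)))) (N (M (M (M (M (M (V 0) (V 1)) (V 6)) (V 12)) (V 16)) (V 23)))) (N (M (M (M (M (M (V 0) (V 1)) (V 6)) (V 12)) (V 14)) (V 25)))) (M (M (M (M (M (V 0) (V 0)) (V 7)) (V 14)) (V 16)) (V 21))) (M (M (M (M (M (V 0) (V 0)) (V 7)) (V 12)) (V 16)) (V 23))) (M (M (M (M (M (V 0) (V 0)) (V 7)) (V 12)) (V 14)) (V 25)).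
Definition TE : ex := A (A (A (A (A (A (A (A (A (A (A (A (A (A (A (A (A (A (A (A (A (A (A (A (A (A (A (A (A (A (A (A (A (A (A (A (A (A (M (V 10) (V 19)) (M (V 9) (V 18))) (M (V 8) (V 17))) (M (M (M (M (C 2) (V 5)) (V 6)) (V 11)) (V 20))) (N (M (M (M (M (C 2) (V 4)) (V 7)) (V 11)) (V 20)))) (M (M (M (M (C 2) (V 3)) (V 6)) (V 13)) (V 22))) (M (M (M (M (C 2) (V 3)) (V 5)) (V 15)) (V 24))) (N (M (M (M (V 3) (V 4)) (V 16)) (V 24)))) (N (M (M (M (V 3) (V 4)) (V 15)) (V 25)))) (N (M (M (M (V 3) (V 4)) (V 14)) (V 22)))) (N (M (M (M (V 3) (V 4)) (V 13)) (V 23)))) (M (M (M (V 3) (V 4)) (V 12)) (V 20))) (M (M (M (V 3) (V 4)) (V 11)) (V 21))) (N (M (M (M (M (C 2) (V 2)) (V 7)) (V 13)) (V 22)))) (N (M (M (M (V 2) (V 5)) (V 16)) (V 24)))) (N (M (M (M (V 2) (V 5)) (V 15)) (V 25)))) (M (M (M (V 2) (V 5)) (V 14)) (V 22))) (M (M (M (V 2) (V 5)) (V 13)) (V 23))) (N (M (M (M (V 2) (V 5)) (V 12)) (V 20)))) (N (M (M (M (V 2) (V 5)) (V 11)) (V 21)))) (M (M (M (M (C 2) (V 2)) (V 4)) (V 16)) (V 25))) (N (M (M (M (M (C 2) (V 1)) (V 7)) (V 15)) (V 24)))) (M (M (M (V 1) (V 6)) (V 16)) (V 24))) (M (M (M (V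 1) (V 6)) (V 15)) (V 25))) (N (M (M (M (V 1) (V 6)) (V 14)) (V 22)))) (N (M (M (M (V 1) (V 6)) (V 13)) (V 23)))) (N (M (M (M (V 1) (V 6)) (V 12)) (V 20)))) (N (M (M (M (V 1) (V 6)) (V 11)) (V 21)))) (M (M (M (M (C 2) (V 1)) (V 4)) (V 14)) (V 23))) (M (M (M (M (C 2) (V 1)) (V 2)) (V 12)) (V 21))) (M (M (M (V 0) (V 7)) (V 16)) (V 24))) (M (M (M (V 0) (V 7)) (V 15)) (V 25))) (M (M (M (V 0) (V 7)) (V 14)) (V 22))) (M (M (M (V 0) (V 7)) (V 13)) (V 23))) (M (M (M (V 0) (V 7)) (V 12)) (V 20))) (M (M (M (V 0) (V 7)) (V 11)) (V 21))) (N (M (M (M (M (C 2) (V 0)) (V 6)) (V 16)) (V 25)))) (N (M (M (M (M (C 2) (V 0)) (V 5)) (V 14)) (V 23)))) (N (M (M (M (M (C 2) (V 0)) (V 3)) (V 12)) (V 21))).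

Definition Qf (R : comRingType) (p : coeffs R) (a1 a2 a3 a4 a5 a6 a7 a8 a9 b1 b2 b3 b4 b5 b6 b7 b8 b9 : R) : R := ev (envl p a1 a2 a3 a4 a5 a6 a7 a8 a9 b1 b2 b3 b4 b5 b6 b7 b8 b9) QE.
Definition Wf (R : comRingType) (p : coeffs R) (a1 a2 a3 a4 a5 a6 a7 a8 a9 b1 b2 b3 b4 b5 b6 b7 b8 b9 : R) : R := ev (envl p a1 a2 a3 a4 a5 a6 a7 a8 a9 b1 b2 b3 b4 b5 b6 b7 b8 b9) WE.
Definition Texp (R : comRingType) (p : coeffs R) (a1 a2 a3 a4 a5 a6 a7 a8 a9 b1 b2 b3 b4 b5 b6 b7 b8 b9 : R) : R := ev (envl p a1 a2 a3 a4 a5 a6 a7 a8 a9 b1 b2 b3 b4 b5 b6 b7 b8 b9) TE.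

Lemma Nexp1 (R : comRingType) (p : coeffs R) (a1 a2 a3 a4 a5 a6 a7 a8 a9 t : R) :
  Nform p (mk (1 + t * a1) (1 + t * a2) (1 + t * a3) (0 + t * a4) (0 + t * a5) (0 + t * a6) (0 + t * a7) (0 + t * a8) (0 + t * a9)) = 1 + t * (a1 + a2 + a3) + t ^+ 2 * Z1 p a1 a2 a3 a4 a5 a6 a7 a8 a9 t.
Proof. rewrite /Nform /Z1 !xcE /=. ring. Qed.

Lemma Nexp2 (R : comRingType) (p : coeffs R) (a1 a2 a3 a4 a5 a6 a7 a8 a9 b1 b2 b3 b4 b5 b6 b7 b8 b9 s t : R) :
  Nform p (mk (1 + (s * a1 + t * b1)) (1 + (s * a2 + t * b2)) (1 + (s * a3 + t * b3)) (0 + (s * a4 + t * b4)) (0 + (s * a5 + t * b5)) (0 + (s * a6 + t * b6)) (0 + (s * a7 + t * b7)) (0 + (s * a8 + t * b8)) (0 + (s * a9 + t * b9))) = Nform p (mk (1 + s * a1) (1 + s * a2) (1 + s * a3) (0 + s * a4) (0 + s * a5) (0 + s * a6) (0 + s * a7) (0 + s * a8) (0 + s * a9)) +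
    t * ((b1 + b2 + b3) + s * Qf p a1 a2 a3 a4 a5 a6 a7 a8 a9 b1 b2 b3 b4 b5 b6 b7 b8 b9 + s ^+ 2 * Wf p a1 a2 a3 a4 a5 a6 a7 a8 a9 b1 b2 b3 b4 b5 b6 b7 b8 b9) + t ^+ 2 * Z2 p a1 a2 a3 a4 a5 a6 a7 a8 a9 b1 b2 b3 b4 b5 b6 b7 b8 b9 s t.
Proof. rewrite /Nform /Qf /Wf /Z2 !xcE /=. ring. Qed.

Lemma NformE (R : comRingType) (p : coeffs R) (a1 a2 a3 a4 a5 a6 a7 a8 a9 : R) :
  Nform p (mk a1 a2 a3 a4 a5 a6 a7 a8 a9) = ev (envl p a1 a2 a3 a4 a5 a6 a7 a8 a9 0 0 0 0 0 0 0 0 0) NE.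
Proof. rewrite /Nform !xcE /=. ring. Qed.
Definition SHE1 : ex := A (A (A (A (A (A (A (A (M (V 9) (V 10)) (N (M (M (M (V 5) (V 6)) (V 11)) (V 11)))) (M (M (M (V 4) (V 7)) (V 11)) (V 11))) (N (M (M (M (V 3) (V 4)) (V 11)) (V 12)))) (M (M (M (V 2) (V 5)) (V 11)) (V 12))) (M (M (M (V 1) (V 6)) (V 11)) (V 12))) (N (M (M (M (V 1) (V 2)) (V 12)) (V 12)))) (N (M (M (M (V 0) (V 7)) (V 11)) (V 12)))) (M (M (M (V 0) (V 3)) (V 12)) (V 12)).
Definition SHE2 : ex := A (A (A (A (A (A (A (A (M (V 8) (V 10)) (N (M (M (M (V 3) (V 6)) (V 13)) (V 13)))) (M (M (M (V 3) (V 4)) (V 13)) (V 14))) (M (M (M (V 2) (V 7)) (V 13)) (V 13))) (N (M (M (M (V 2) (V 5)) (V 13)) (V 14)))) (M (M (M (V 1) (V 6)) (V 13)) (V 14))) (N (M (M (M (V 1) (V 4)) (V 14)) (V 14)))) (N (M (M (M (V 0) (V 7)) (V 13)) (V 14)))) (M (M (M (V 0) (V 5)) (V 14)) (V 14)).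
Definition SHE3 : ex := A (A (A (A (A (A (A (A (M (V 8) (V 9)) (N (M (M (M (V 3) (V 5)) (V 15)) (V 15)))) (M (M (M (V 3) (V 4)) (V 15)) (V 16))) (M (M (M (V 2) (V 5)) (V 15)) (V 16))) (N (M (M (M (V 2) (V 4)) (V 16)) (V 16)))) (M (M (M (V 1) (V 7)) (V 15)) (V 15))) (N (M (M (M (V 1) (V 6)) (V 15)) (V 16)))) (N (M (M (M (V 0) (V 7)) (V 15)) (V 16)))) (M (M (M (V 0) (V 6)) (V 16)) (V 16)).
Definition SHE4 : ex := A (A (A (A (N (M (V 8) (V 11))) (M (M (V 3) (V 13)) (V 15))) (N (M (M (V 2) (V 13)) (V 16)))) (N (M (M (V 1) (V 14)) (V 15)))) (M (M (V 0) (V 14)) (V 16)).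
Definition SHE5 : ex := A (A (A (A (N (M (V 8) (V 12))) (M (M (V 7) (V 13)) (V 15))) (N (M (M (V 6) (V 13)) (V 16)))) (N (M (M (V 5) (V 14)) (V 15)))) (M (M (V 4) (V 14)) (V 16)).
Definition SHE6 : ex := A (A (A (A (N (M (V 9) (V 13))) (M (M (V 5) (V 11)) (V 15))) (N (M (M (V 4) (V 11)) (V 16)))) (N (M (M (V 1) (V 12)) (V 15)))) (M (M (V 0) (V 12)) (V 16)).
Definition SHE7 : ex := A (A (A (A (N (M (V 9) (V 14))) (M (M (V 7) (V 11)) (V 15))) (N (M (M (V 6) (V 11)) (V 16)))) (N (M (M (V 3) (V 12)) (V 15)))) (M (M (V 2) (V 12)) (V 16)).
Definition SHE8 : ex := A (A (A (A (N (M (V 10) (V 15))) (M (M (V 6) (V 11)) (V 13))) (N (M (M (V 4) (V 11)) (V 14)))) (N (M (M (V 2) (V 12)) (V 13)))) (M (M (V 0) (V 12)) (V 14)).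
Definition SHE9 : ex := A (A (A (A (N (M (V 10) (V 16))) (M (M (V 7) (V 11)) (V 13))) (N (M (M (V 5) (V 11)) (V 14)))) (N (M (M (V 3) (V 12)) (V 13)))) (M (M (V 1) (V 12)) (V 14)).
Definition SH2E1 : ex := A (A (A (A (A (A (A (A (A (A (A (A (A (M (V 10) (V 18)) (M (V 9) (V 19))) (N (M (M (M (M (C 2) (V 5)) (V 6)) (V 11)) (V 20)))) (M (M (M (M (C 2) (V 4)) (V 7)) (V 11)) (V 20))) (N (M (M (M (V 3) (V 4)) (V 12)) (V 20)))) (N (M (M (M (V 3) (V 4)) (V 11)) (V 21)))) (M (M (M (V 2) (V 5)) (V 12)) (V 20))) (M (M (M (V 2) (V 5)) (V 11)) (V 21))) (M (M (M (V 1) (V 6)) (V 12)) (V 20))) (M (M (M (V 1) (V 6)) (V 11)) (V 21))) (N (M (M (M (M (C 2) (V 1)) (V 2)) (V 12)) (V 21)))) (N (M (M (M (V 0) (V 7)) (V 12)) (V 20)))) (N (M (M (M (V 0) (V 7)) (V 11)) (V 21)))) (M (M (M (M (C 2) (V 0)) (V 3)) (V 12)) (V 21)).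
Definition SH2E2 : ex := A (A (A (A (A (A (A (A (A (A (A (A (A (M (V 10) (V 17)) (M (V 8) (V 19))) (N (M (M (M (M (C 2) (V 3)) (V 6)) (V 13)) (V 22)))) (M (M (M (V 3) (V 4)) (V 14)) (V 22))) (M (M (M (V 3) (V 4)) (V 13)) (V 23))) (M (M (M (M (C 2) (V 2)) (V 7)) (V 13)) (V 22))) (N (M (M (M (V 2) (V 5)) (V 14)) (V 22)))) (N (M (M (M (V 2) (V 5)) (V 13)) (V 23)))) (M (M (M (V 1) (V 6)) (V 14)) (V 22))) (M (M (M (V 1) (V 6)) (V 13)) (V 23))) (N (M (M (M (M (C 2) (V 1)) (V 4)) (V 14)) (V 23)))) (N (M (M (M (V 0) (V 7)) (V 14)) (V 22)))) (N (M (M (M (V 0) (V 7)) (V 13)) (V 23)))) (M (M (M (M (C 2) (V 0)) (V 5)) (V 14)) (V 23)).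
Definition SH2E3 : ex := A (A (A (A (A (A (A (A (A (A (A (A (A (M (V 9) (V 17)) (M (V 8) (V 18))) (N (M (M (M (M (C 2) (V 3)) (V 5)) (V 15)) (V 24)))) (M (M (M (V 3) (V 4)) (V 16)) (V 24))) (M (M (M (V 3) (V 4)) (V 15)) (V 25))) (M (M (M (V 2) (V 5)) (V 16)) (V 24))) (M (M (M (V 2) (V 5)) (V 15)) (V 25))) (N (M (M (M (M (C 2) (V 2)) (V 4)) (V 16)) (V 25)))) (M (M (M (M (C 2) (V 1)) (V 7)) (V 15)) (V 24))) (N (M (M (M (V 1) (V 6)) (V 16)) (V 24)))) (N (M (M (M (V 1) (V 6)) (V 15)) (V 25)))) (N (M (M (M (V 0) (V 7)) (V 16)) (V 24)))) (N (M (M (M (V 0) (V 7)) (V 15)) (V 25)))) (M (M (M (M (C 2) (V 0)) (V 6)) (V 16)) (V 25)).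
Definition SH2E4 : ex := A (A (A (A (A (A (A (A (A (N (M (V 11) (V 17))) (N (M (V 8) (V 20)))) (M (M (V 3) (V 15)) (V 22))) (M (M (V 3) (V 13)) (V 24))) (N (M (M (V 2) (V 16)) (V 22)))) (N (M (M (V 2) (V 13)) (V 25)))) (N (M (M (V 1) (V 15)) (V 23)))) (N (M (M (V 1) (V 14)) (V 24)))) (M (M (V 0) (V 16)) (V 23))) (M (M (V 0) (V 14)) (V 25)).
Definition SH2E5 : ex := A (A (A (A (A (A (A (A (A (N (M (V 12) (V 17))) (N (M (V 8) (V 21)))) (M (M (V 7) (V 15)) (V 22))) (M (M (V 7) (V 13)) (V 24))) (N (M (M (V 6) (V 16)) (V 22)))) (N (M (M (V 6) (V 13)) (V 25)))) (N (M (M (V 5) (V 15)) (V 23)))) (N (M (M (V 5) (V 14)) (V 24)))) (M (M (V 4) (V 16)) (V 23))) (M (M (V 4) (V 14)) (V 25)).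
Definition SH2E6 : ex := A (A (A (A (A (A (A (A (A (N (M (V 13) (V 18))) (N (M (V 9) (V 22)))) (M (M (V 5) (V 15)) (V 20))) (M (M (V 5) (V 11)) (V 24))) (N (M (M (V 4) (V 16)) (V 20)))) (N (M (M (V 4) (V 11)) (V 25)))) (N (M (M (V 1) (V 15)) (V 21)))) (N (M (M (V 1) (V 12)) (V 24)))) (M (M (V 0) (V 16)) (V 21))) (M (M (V 0) (V 12)) (V 25)).
Definition SH2E7 : ex := A (A (A (A (A (A (A (A (A (N (M (V 14) (V 18))) (N (M (V 9) (V 23)))) (M (M (V 7) (V 15)) (V 20))) (M (M (V 7) (V 11)) (V 24))) (N (M (M (V 6) (V 16)) (V 20)))) (N (M (M (V 6) (V 11)) (V 25)))) (N (M (M (V 3) (V 15)) (V 21)))) (N (M (M (V 3) (V 12)) (V 24)))) (M (M (V 2) (V 16)) (V 21))) (M (M (V 2) (V 12)) (V 25)).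
Definition SH2E8 : ex := A (A (A (A (A (A (A (A (A (N (M (V 15) (V 19))) (N (M (V 10) (V 24)))) (M (M (V 6) (V 13)) (V 20))) (M (M (V 6) (V 11)) (V 22))) (N (M (M (V 4) (V 14)) (V 20)))) (N (M (M (V 4) (V 11)) (V 23)))) (N (M (M (V 2) (V 13)) (V 21)))) (N (M (M (V 2) (V 12)) (V 22)))) (M (M (V 0) (V 14)) (V 21))) (M (M (V 0) (V 12)) (V 23)).
Definition SH2E9 : ex := A (A (A (A (A (A (A (A (A (N (M (V 16) (V 19))) (N (M (V 10) (V 25)))) (M (M (V 7) (V 13)) (V 20))) (M (M (V 7) (V 11)) (V 22))) (N (M (M (V 5) (V 14)) (V 20)))) (N (M (M (V 5) (V 11)) (V 23)))) (N (M (M (V 3) (V 13)) (V 21)))) (N (M (M (V 3) (V 12)) (V 22)))) (M (M (V 1) (V 14)) (V 21))) (M (M (V 1) (V 12)) (V 23)).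

Lemma elt_eq (R : Type) (s t : elt R) :
  eu1 s = eu1 t -> eu2 s = eu2 t -> eu3 s = eu3 t ->
  xc s o1 j1 = xc t o1 j1 -> xc s o2 j1 = xc t o2 j1 ->
  xc s o1 j2 = xc t o1 j2 -> xc s o2 j2 = xc t o2 j2 ->
  xc s o1 j3 = xc t o1 j3 -> xc s o2 j3 = xc t o2 j3 -> s = t.
Proof. move=> H1 H2 H3 H4 H5 H6 H7 H8 H9. by rewrite [LHS]eltE [RHS]eltE H1 H2 H3 H4 H5 H6 H7 H8 H9. Qed.

Lemma Nform_map (R S : comRingType) (f : {rmorphism R -> S}) (p : coeffs R)
  a1 a2 a3 a4 a5 a6 a7 a8 a9 :
  Nform (fun a b c => f (p a b c)) (mk (f a1) (f a2) (f a3) (f a4) (f a5) (f a6) (f a7) (f a8) (f a9))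
  = f (Nform p (mk a1 a2 a3 a4 a5 a6 a7 a8 a9)).
Proof. by rewrite !NformE ev_map envl_map rmorph0. Qed.

Lemma dN1E (k : fieldType) (p : coeffs k) (x : elt k) :
  dN1 p x = eu1 x + eu2 x + eu3 x.
Proof.
rewrite /dN1 {1}(eltE x) mk_map mk_scale eoneE mk_add /= Nexp1.
rewrite !coefD coef1 coefXM coefXnM /= !coefD !coefC /=.
by rewrite add0r addr0.
Qed.

Lemma Qf_map (R S : comRingType) (f : {rmorphism R -> S}) (p : coeffs R) a1 a2 a3 a4 a5 a6 a7 a8 a9 b1 b2 b3 b4 b5 b6 b7 b8 b9 :
  Qf (fun a b c => f (p a b c)) (f a1) (f a2) (f a3) (f a4) (f a5) (f a6) (f a7) (f a8) (f a9) (f b1) (f b2) (f b3) (f b4) (f b5) (f b6) (f b7) (f b8) (f b9) = f (Qf p a1 a2 a3 a4 a5 a6 a7 a8 a9 b1 b2 b3 b4 b5 b6 b7 b8 b9).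
Proof. by rewrite /Qf ev_map envl_map. Qed.

Lemma Wf_map (R S : comRingType) (f : {rmorphism R -> S}) (p : coeffs R) a1 a2 a3 a4 a5 a6 a7 a8 a9 b1 b2 b3 b4 b5 b6 b7 b8 b9 :
  Wf (fun a b c => f (p a b c)) (f a1) (f a2) (f a3) (f a4) (f a5) (f a6) (f a7) (f a8) (f a9) (f b1) (f b2) (f b3) (f b4) (f b5) (f b6) (f b7) (f b8) (f b9) = f (Wf p a1 a2 a3 a4 a5 a6 a7 a8 a9 b1 b2 b3 b4 b5 b6 b7 b8 b9).
Proof. by rewrite /Wf ev_map envl_map. Qed.

Lemma Texp_map (R S : comRingType) (f : {rmorphism R -> S}) (p : coeffs R) a1 a2 a3 a4 a5 a6 a7 a8 a9 b1 b2 b3 b4 b5 b6 b7 b8 b9 :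
  Texp (fun a b c => f (p a b c)) (f a1) (f a2) (f a3) (f a4) (f a5) (f a6) (f a7) (f a8) (f a9) (f b1) (f b2) (f b3) (f b4) (f b5) (f b6) (f b7) (f b8) (f b9) = f (Texp p a1 a2 a3 a4 a5 a6 a7 a8 a9 b1 b2 b3 b4 b5 b6 b7 b8 b9).
Proof. by rewrite /Texp ev_map envl_map. Qed.

Definition crd (R : Type) (x : elt R) := (eu1 x, eu2 x, eu3 x, xc x o1 j1, xc x o2 j1, xc x o1 j2, xc x o2 j2, xc x o1 j3, xc x o2 j3).

Lemma ddN1E (k : fieldType) (p : coeffs k) (x y : elt k) :
  ddN1 p x y = Qf p (eu1 x) (eu2 x) (eu3 x) (xc x o1 j1) (xc x o2 j1) (xc x o1 j2) (xc x o2 j2) (xc x o1 j3) (xc x o2 j3)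
                   (eu1 y) (eu2 y) (eu3 y) (xc y o1 j1) (xc y o2 j1) (xc y o1 j2) (xc y o2 j2) (xc y o1 j3) (xc y o2 j3).
Proof.
rewrite /ddN1 {1}(eltE x) {1}(eltE y) !mk_map !mk_scale eoneE !mk_add /= Nexp2.
have K1 : forall a : k, 1 + 'X%:P * a%:P%:P = (1 + 'X * a%:P)%:P.
  by move=> a; rewrite rmorphD rmorph1 rmorphM.
have K0 : forall a : k, 0 + 'X%:P * a%:P%:P = (0 + 'X * a%:P)%:P.
  by move=> a; rewrite rmorphD rmorph0 rmorphM.
rewrite !K1 !K0 Nform_map !Qf_map !Wf_map.
rewrite !coefD coefC coefXM coefXnM /=.
rewrite !coef0 add0r addr0 -rmorphXn !coefD !coefC !coefCM !coefC /=.
by rewrite coefXM coefXnM /= !coefC /= !add0r addr0.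
Qed.

Lemma TformE (k : fieldType) (p : coeffs k) (x y : elt k) :
  Tform p x y = Texp p (eu1 x) (eu2 x) (eu3 x) (xc x o1 j1) (xc x o2 j1) (xc x o1 j2) (xc x o2 j2) (xc x o1 j3) (xc x o2 j3)
                   (eu1 y) (eu2 y) (eu3 y) (xc y o1 j1) (xc y o2 j1) (xc y o1 j2) (xc y o2 j2) (xc y o1 j3) (xc y o2 j3).
Proof. rewrite /Tform ddN1E !dN1E /Qf /Texp /=. ring. Qed.


Definition E0 (R : comRingType) (p : coeffs R) a1 a2 a3 a4 a5 a6 a7 a8 a9 : seq R :=
  envl p a1 a2 a3 a4 a5 a6 a7 a8 a9 0 0 0 0 0 0 0 0 0.

Lemma sharp_mk (R : comRingType) (p : coeffs R) (a1 a2 a3 a4 a5 a6 a7 a8 a9 : R) :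
  sharp p (mk a1 a2 a3 a4 a5 a6 a7 a8 a9) =
  mk (ev (E0 p a1 a2 a3 a4 a5 a6 a7 a8 a9) SHE1) (ev (E0 p a1 a2 a3 a4 a5 a6 a7 a8 a9) SHE2) (ev (E0 p a1 a2 a3 a4 a5 a6 a7 a8 a9) SHE3) (ev (E0 p a1 a2 a3 a4 a5 a6 a7 a8 a9) SHE4) (ev (E0 p a1 a2 a3 a4 a5 a6 a7 a8 a9) SHE5) (ev (E0 p a1 a2 a3 a4 a5 a6 a7 a8 a9) SHE6) (ev (E0 p a1 a2 a3 a4 a5 a6 a7 a8 a9) SHE7) (ev (E0 p a1 a2 a3 a4 a5 a6 a7 a8 a9) SHE8) (ev (E0 p a1 a2 a3 a4 a5 a6 a7 a8 a9) SHE9).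
Proof.
apply: elt_eq; rewrite ?xcE /=.
all: rewrite /xc /sharp /Dm /Dmix /Dent /= ?det2E ?adj2E ?mxE /=.
all: rewrite ?big_ord_recl ?big_ord0 ?mxE ?xcE /=.
all: ring.
Qed.

Definition E2 (R : comRingType) (p : coeffs R) a1 a2 a3 a4 a5 a6 a7 a8 a9 b1 b2 b3 b4 b5 b6 b7 b8 b9 : seq R :=
  envl p a1 a2 a3 a4 a5 a6 a7 a8 a9 b1 b2 b3 b4 b5 b6 b7 b8 b9.

Lemma sharp2_mk (R : fieldType) (p : coeffs R) (a1 a2 a3 a4 a5 a6 a7 a8 a9 b1 b2 b3 b4 b5 b6 b7 b8 b9 : R) :
  sharp2 p (mk a1 a2 a3 a4 a5 a6 a7 a8 a9) (mk b1 b2 b3 b4 b5 b6 b7 b8 b9) =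
  mk (ev (E2 p a1 a2 a3 a4 a5 a6 a7 a8 a9 b1 b2 b3 b4 b5 b6 b7 b8 b9) SH2E1) (ev (E2 p a1 a2 a3 a4 a5 a6 a7 a8 a9 b1 b2 b3 b4 b5 b6 b7 b8 b9) SH2E2) (ev (E2 p a1 a2 a3 a4 a5 a6 a7 a8 a9 b1 b2 b3 b4 b5 b6 b7 b8 b9) SH2E3) (ev (E2 p a1 a2 a3 a4 a5 a6 a7 a8 a9 b1 b2 b3 b4 b5 b6 b7 b8 b9) SH2E4) (ev (E2 p a1 a2 a3 a4 a5 a6 a7 a8 a9 b1 b2 b3 b4 b5 b6 b7 b8 b9) SH2E5) (ev (E2 p a1 a2 a3 a4 a5 a6 a7 a8 a9 b1 b2 b3 b4 b5 b6 b7 b8 b9) SH2E6) (ev (E2 p a1 a2 a3 a4 a5 a6 a7 a8 a9 b1 b2 b3 b4 b5 b6 b7 b8 b9) SH2E7) (ev (E2 p a1 a2 a3 a4 a5 a6 a7 a8 a9 b1 b2 b3 b4 b5 b6 b7 b8 b9) SH2E8) (ev (E2 p a1 a2 a3 a4 a5 a6 a7 a8 a9 b1 b2 b3 b4 b5 b6 b7 b8 b9) SH2E9).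
Proof.
rewrite /sharp2 !mk_add !sharp_mk !mk_add mk_opp mk_add /E0 /E2 /=.
by congr mk; ring.
Qed.

Arguments Texp : simpl never.

Lemma eq0_trans (R : comRingType) (x y : R) : x = y -> x = 0 -> y = 0.
Proof. by move=> <-. Qed.

Lemma sq0 (k : fieldType) (x : k) : x * x = 0 -> x = 0.
Proof. by move/eqP; rewrite mulf_eq0 orbb => /eqP. Qed.

Lemma blk (k : fieldType) (al be ga x y h : k) :
  h = be ^+ 2 - al * ga -> h != 0 ->
  (al * x + be * y) * x = 0 -> (be * x + ga * y) * x = 0 ->
  (al * x + be * y) * y = 0 -> (be * x + ga * y) * y = 0 -> x = 0 /\ y = 0.
Proof.
move=> Hh h0 E1 E2 E3 E4; split.
- have : h * (x * x) = be * ((be * x + ga * y) * x) - ga * ((al * x + be * y) * x).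
    by rewrite Hh; ring.
  rewrite E1 E2 !mulr0 subrr => /eqP; rewrite mulf_eq0 (negbTE h0) /= => /eqP.
  exact: sq0.
- have : h * (y * y) = be * ((al * x + be * y) * y) - al * ((be * x + ga * y) * y).
    by rewrite Hh; ring.
  rewrite E3 E4 !mulr0 subrr => /eqP; rewrite mulf_eq0 (negbTE h0) /= => /eqP.
  exact: sq0.
Qed.

Lemma elt_ex (R : Type) (s : elt R) :
  exists c1 c2 c3 c4 c5 c6 c7 c8 c9, s = mk c1 c2 c3 c4 c5 c6 c7 c8 c9.
Proof. by rewrite (eltE s); do 9 eexists. Qed.

Lemma Ucoords (k : fieldType) (p : coeffs k) a1 a2 a3 a4 a5 a6 a7 a8 a9
   c1 c2 c3 c4 c5 c6 c7 c8 c9 b1 b2 b3 b4 b5 b6 b7 b8 b9 :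
  sharp p (mk a1 a2 a3 a4 a5 a6 a7 a8 a9) = mk c1 c2 c3 c4 c5 c6 c7 c8 c9 ->
  let T := Texp p a1 a2 a3 a4 a5 a6 a7 a8 a9 b1 b2 b3 b4 b5 b6 b7 b8 b9 in
  let l := E2 p c1 c2 c3 c4 c5 c6 c7 c8 c9 b1 b2 b3 b4 b5 b6 b7 b8 b9 in
  Uop p (mk a1 a2 a3 a4 a5 a6 a7 a8 a9) (mk b1 b2 b3 b4 b5 b6 b7 b8 b9) =
  mk (T * a1 + - ev l SH2E1) (T * a2 + - ev l SH2E2) (T * a3 + - ev l SH2E3)
     (T * a4 + - ev l SH2E4) (T * a5 + - ev l SH2E5) (T * a6 + - ev l SH2E6)
     (T * a7 + - ev l SH2E7) (T * a8 + - ev l SH2E8) (T * a9 + - ev l SH2E9).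
Proof.
move=> Hc T l.
by rewrite /Uop Hc sharp2_mk TformE !xcE mk_scale mk_opp mk_add.
Qed.

Ltac solve0 e :=
  first [ apply: (eq0_trans _ e); rewrite /Texp /E2 /=; ring
        | apply/eqP; rewrite -oppr_eq0; apply/eqP; apply: (eq0_trans _ e); rewrite /Texp /E2 /=; ring ].

Lemma dirA (k : fieldType) (p : coeffs k) : hyperdet p != 0 -> J_nondegenerate p.
Proof.
move=> Hd s; rewrite (eltE s) ezeroE.
move: (eu1 s) (eu2 s) (eu3 s) (xc s o1 j1) (xc s o2 j1) (xc s o1 j2) (xc s o2 j2) (xc s o1 j3) (xc s o2 j3).
move=> a1 a2 a3 a4 a5 a6 a7 a8 a9 H.
have [c1 [c2 [c3 [c4 [c5 [c6 [c7 [c8 [c9 Hc]]]]]]]]] := elt_ex (sharp p (mk a1 a2 a3 a4 a5 a6 a7 a8 a9)).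
have EQ := fun b1 b2 b3 b4 b5 b6 b7 b8 b9 =>
  etrans (esym (Ucoords b1 b2 b3 b4 b5 b6 b7 b8 b9 Hc)) (H _).
have [e1 _] := mk_inj (EQ 1 0 0 0 0 0 0 0 0).
have [_ [e2 _]] := mk_inj (EQ 0 1 0 0 0 0 0 0 0).
have [_ [_ [e3 _]]] := mk_inj (EQ 0 0 1 0 0 0 0 0 0).
have ha1 : a1 = 0 by apply: sq0; solve0 e1.
have ha2 : a2 = 0 by apply: sq0; solve0 e2.
have ha3 : a3 = 0 by apply: sq0; solve0 e3.
clear e1 e2 e3; subst a1 a2 a3.
have [_ [f2 [f3 [f4 [f5 _]]]]] := mk_inj (EQ 1 0 0 0 0 0 0 0 0).
have [_ [_ [g3 [_ [_ [g6 [g7 _]]]]]]] := mk_inj (EQ 0 1 0 0 0 0 0 0 0).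
have [_ [_ [_ [_ [_ [_ [_ [h8 h9]]]]]]]] := mk_inj (EQ 0 0 1 0 0 0 0 0 0).
have hc3 : c3 = 0 by solve0 f2.
have hc2 : c2 = 0 by solve0 f3.
have hc4 : c4 = 0 by solve0 f4.
have hc5 : c5 = 0 by solve0 f5.
have hc1 : c1 = 0 by solve0 g3.
have hc6 : c6 = 0 by solve0 g6.
have hc7 : c7 = 0 by solve0 g7.
have hc8 : c8 = 0 by solve0 h8.
have hc9 : c9 = 0 by solve0 h9.
subst c1 c2 c3 c4 c5 c6 c7 c8 c9.
have [_ [_ [_ [q4 [q5 _]]]]] := mk_inj (EQ 0 0 0 1 0 0 0 0 0).
have [_ [_ [_ [r4 [r5 _]]]]] := mk_inj (EQ 0 0 0 0 1 0 0 0 0).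
have [z4 z5] : a4 = 0 /\ a5 = 0.
  apply: (@blk _ (2%:R * (p o2 o1 o2) * (p o2 o2 o1) - 2%:R * (p o2 o1 o1) * (p o2 o2 o2)) ((p o1 o2 o2) * (p o2 o1 o1) - (p o1 o2 o1) * (p o2 o1 o2) - (p o1 o1 o2) * (p o2 o2 o1) + (p o1 o1 o1) * (p o2 o2 o2)) (2%:R * (p o1 o1 o2) * (p o1 o2 o1) - 2%:R * (p o1 o1 o1) * (p o1 o2 o2)) a4 a5 (hyperdet p) _ Hd).
  - by rewrite /hyperdet /=; ring.
  - solve0 q4.
  - solve0 r4.
  - solve0 q5.
  - solve0 r5.
have [_ [_ [_ [_ [_ [q6 [q7 _]]]]]]] := mk_inj (EQ 0 0 0 0 0 1 0 0 0).
have [_ [_ [_ [_ [_ [r6 [r7 _]]]]]]] := mk_inj (EQ 0 0 0 0 0 0 1 0 0).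
have [z6 z7] : a6 = 0 /\ a7 = 0.
  apply: (@blk _ (2%:R * (p o1 o2 o2) * (p o2 o2 o1) - 2%:R * (p o1 o2 o1) * (p o2 o2 o2)) (- (p o1 o2 o2) * (p o2 o1 o1) + (p o1 o2 o1) * (p o2 o1 o2) - (p o1 o1 o2) * (p o2 o2 o1) + (p o1 o1 o1) * (p o2 o2 o2)) (2%:R * (p o1 o1 o2) * (p o2 o1 o1) - 2%:R * (p o1 o1 o1) * (p o2 o1 o2)) a6 a7 (hyperdet p) _ Hd).
  - by rewrite /hyperdet /=; ring.
  - solve0 q6.
  - solve0 r6.
  - solve0 q7.
  - solve0 r7.
have [_ [_ [_ [_ [_ [_ [_ [q8 q9]]]]]]]] := mk_inj (EQ 0 0 0 0 0 0 0 1 0).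
have [_ [_ [_ [_ [_ [_ [_ [r8 r9]]]]]]]] := mk_inj (EQ 0 0 0 0 0 0 0 0 1).
have [z8 z9] : a8 = 0 /\ a9 = 0.
  apply: (@blk _ (2%:R * (p o1 o2 o2) * (p o2 o1 o2) - 2%:R * (p o1 o1 o2) * (p o2 o2 o2)) (- (p o1 o2 o2) * (p o2 o1 o1) - (p o1 o2 o1) * (p o2 o1 o2) + (p o1 o1 o2) * (p o2 o2 o1) + (p o1 o1 o1) * (p o2 o2 o2)) (2%:R * (p o1 o2 o1) * (p o2 o1 o1) - 2%:R * (p o1 o1 o1) * (p o2 o2 o1)) a8 a9 (hyperdet p) _ Hd).
  - by rewrite /hyperdet /=; ring.
  - solve0 q8.
  - solve0 r8.
  - solve0 q9.
  - solve0 r9.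
by rewrite z4 z5 z6 z7 z8 z9.
Qed.

Lemma kernel_vec (k : closedFieldType) (a b c : k) : b ^+ 2 - 4%:R * a * c = 0 ->
  exists x z : k, (x = 1 \/ z = 1) /\ a * x * x + b * x * z + c * z * z = 0 /\
     2%:R * a * x + b * z = 0 /\ b * x + 2%:R * c * z = 0.
Proof.
case: (eqVneq a 0) => [->|a0] H.
  have b0 : b = 0 by apply: sq0; apply: (eq0_trans _ H); ring.
  exists 1, 0; rewrite b0; split; first by left.
  by split; [ring | split; ring].
have [r Hr] := @solve_monicpoly k 2 (nth 0 [:: - c / a; - b / a]) isT.
rewrite !big_ord_recl big_ord0 /= in Hr.
have Hq : a * r * r + b * r + c = 0.
  have -> : a * r * r + b * r + c = a * (r ^+ 2 - (- c / a * r ^+ 0 + (- b / a * r ^+ 1 + 0))).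
    by rewrite expr0 expr1; field.
  by move: Hr; rewrite expr0 expr1 => ->; ring.
have L1 : 2%:R * a * r + b * 1 = 0.
  apply: sq0; apply: (eq0_trans (x := 4%:R * a * (a * r * r + b * r + c) + (b ^+ 2 - 4%:R * a * c))).
    ring.
  by rewrite Hq H mulr0 addr0.
exists r, 1; split; first by right.
split; first by rewrite !mulr1.
split; first exact: L1.
apply: (eq0_trans (x := 2%:R * (a * r * r + b * r + c) - r * (2%:R * a * r + b * 1))); first ring.
by rewrite Hq L1 !mulr0 subr0.
Qed.

Lemma dirB (k : closedFieldType) (p : coeffs k) : J_nondegenerate p -> hyperdet p != 0.
Proof.
move=> ND; apply/negP => /eqP Hd.
pose a := p o2 o1 o1 * p o2 o2 o2 - p o2 o1 o2 * p o2 o2 o1.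
pose b := p o1 o1 o2 * p o2 o2 o1 + p o1 o2 o1 * p o2 o1 o2 - p o1 o1 o1 * p o2 o2 o2 - p o1 o2 o2 * p o2 o1 o1.
pose c := p o1 o1 o1 * p o1 o2 o2 - p o1 o1 o2 * p o1 o2 o1.
have Hd' : b ^+ 2 - 4%:R * a * c = 0.
  by apply: (eq0_trans _ Hd); rewrite /hyperdet /a /b /c /=; ring.
have [x [z [H1 [Hq [L1 L2]]]]] := kernel_vec Hd'.
have Hsh : sharp p (mk 0 0 0 x z 0 0 0 0) = mk 0 0 0 0 0 0 0 0 0.
  rewrite sharp_mk /E0 /=; congr mk; try ring.
  by apply: (eq0_trans _ Hq); rewrite /a /b /c; ring.
have : mk 0 0 0 x z 0 0 0 0 = ezero k.
  apply: ND => y; rewrite (eltE y) ezeroE.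
  move: (eu1 y) (eu2 y) (eu3 y) (xc y o1 j1) (xc y o2 j1) (xc y o1 j2) (xc y o2 j2) (xc y o1 j3) (xc y o2 j3).
  move=> b1 b2 b3 b4 b5 b6 b7 b8 b9.
  apply: etrans (Ucoords b1 b2 b3 b4 b5 b6 b7 b8 b9 Hsh) _ => /=.
  have HT : Texp p 0 0 0 x z 0 0 0 0 b1 b2 b3 b4 b5 b6 b7 b8 b9 = 0.
    apply: (eq0_trans (x := - (b4 * (2%:R * a * x + b * z) + b5 * (b * x + 2%:R * c * z)))).
      by rewrite /Texp /a /b /c /=; ring.
    by rewrite L1 L2 !mulr0 addr0 oppr0.
  rewrite HT /E2 /=; congr mk; ring.
rewrite ezeroE => Emk; have [_ [_ [_ [hx [hz _]]]]] := mk_inj Emk.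
by case: H1 => E; [move: hx | move: hz]; rewrite E => /eqP; rewrite oner_eq0.
Qed.

Theorem corollary4p7 (k : closedFieldType) (p : coeffs k) :
  J_nondegenerate p <-> hyperdet p != 0.
Proof. split; [exact: dirB | exact: dirA]. Qed.
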